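(* Let $f$ be a $C^3$ incompressible velocity field ($\operatorname{tr}\nabla f\equiv0$) on $D\subset\mathbb{R}\times\mathbb{R}^3$, and let $(t_0,x)\in D$ with $d_f:=\det\nabla f(t_0,x)\neq0$. Then there exists $T_{\min}>0$ such that for every $T\in(0,T_{\min})$ the point $x$ is mesohyperbolic on $[t_0,t_0+T]$, i.e. no eigenvalue of $\nabla\psi_T(x)$ lies on the unit circle.
   Context: $\phi(t,t_0,x)$ is the solution of $\dot x=f(t,x)$ with $x(t_0)=x$; the time-$T$ map is $\psi_T(x)=\phi(t_0+T,t_0,x)$. The mesochronic velocity is $\tilde f_T(x)=\frac1T\int_{t_0}^{t_0+T}f(\tau,\phi(\tau,t_0,x))\,d\tau$, with $\nabla\psi_T=\mathrm{Id}+T\nabla\tilde f_T$ and $\nabla\tilde f_T(x)\to\nabla f(t_0,x)$ as $T\to0^+$. A point is mesohyperbolic on $[t_0,t_0+T]$ if no eigenvalue of $\nabla\psi_T(x)$ has modulus $1$. *)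

(* Defs.v *)
From Stdlib Require Import Reals Lra.
Open Scope R_scope.

Definition V3 : Type := (R * R * R)%type.
Definition v0 : V3 := (0, 0, 0).
Definition cmp (v : V3) (i : nat) : R :=
  match v with (a, b, c) => match i with 0%nat => a | 1%nat => b | _ => c end end.
Definition vadd (u v : V3) : V3 :=
  (cmp u 0 + cmp v 0, cmp u 1 + cmp v 1, cmp u 2 + cmp v 2).
Definition vsub (u v : V3) : V3 :=
  (cmp u 0 - cmp v 0, cmp u 1 - cmp v 1, cmp u 2 - cmp v 2).
Definition vscal (a : R) (v : V3) : V3 := (a * cmp v 0, a * cmp v 1, a * cmp v 2).
(** a norm on R^3 (all norms are equivalent) *)
Definition n1 (v : V3) : R := Rabs (cmp v 0) + Rabs (cmp v 1) + Rabs (cmp v 2).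

(** matrices: only entries with indices 0,1,2 are ever used *)
Definition M3 : Type := nat -> nat -> R.
Definition mrow (A : M3) (i : nat) (v : V3) : R :=
  A i 0%nat * cmp v 0 + A i 1%nat * cmp v 1 + A i 2%nat * cmp v 2.
Definition mapply (A : M3) (v : V3) : V3 := (mrow A 0 v, mrow A 1 v, mrow A 2 v).
Definition det3 (A : M3) : R :=
    A 0%nat 0%nat * (A 1%nat 1%nat * A 2%nat 2%nat - A 1%nat 2%nat * A 2%nat 1%nat)
  - A 0%nat 1%nat * (A 1%nat 0%nat * A 2%nat 2%nat - A 1%nat 2%nat * A 2%nat 0%nat)
  + A 0%nat 2%nat * (A 1%nat 0%nat * A 2%nat 1%nat - A 1%nat 1%nat * A 2%nat 0%nat).

(** [A] has a (complex) eigenvalue a + i b of modulus 1: there is a nonzero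
    complex eigenvector u + i w, i.e. A (u + i w) = (a + i b)(u + i w). *)
Definition has_unit_eigenvalue (A : M3) : Prop :=
  exists a b : R, exists u w : V3,
    a * a + b * b = 1 /\ (u <> v0 \/ w <> v0) /\
    mapply A u = vsub (vscal a u) (vscal b w) /\
    mapply A w = vadd (vscal b u) (vscal a w).

Definition open_domain (D : R -> V3 -> Prop) : Prop :=
  forall t y, D t y -> exists r, 0 < r /\
    forall s z, Rabs (s - t) + n1 (vsub z y) < r -> D s z.

Definition cont_on (D : R -> V3 -> Prop) (g : R -> V3 -> R) : Prop :=
  forall t y, D t y -> forall eps, 0 < eps -> exists del, 0 < del /\
    forall s z, D s z -> Rabs (s - t) + n1 (vsub z y) < del ->
      Rabs (g s z - g t y) < eps.

(** shift of the point (t,y) of R x R^3 by h in coordinate direction k: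
    k = 0 is time, k = 1,2,3 are the space coordinates x1,x2,x3 *)
Definition shift (t : R) (y : V3) (k : nat) (h : R) : R * V3 :=
  match k with
  | 0%nat => (t + h, y)
  | 1%nat => (t, vadd y (h, 0, 0))
  | 2%nat => (t, vadd y (0, h, 0))
  | _ => (t, vadd y (0, 0, h))
  end.

Definition partial (g : R -> V3 -> R) (k : nat) (t : R) (y : V3) (l : R) : Prop :=
  derivable_pt_lim (fun h => g (fst (shift t y k h)) (snd (shift t y k h))) 0 l.

Fixpoint Ck (n : nat) (D : R -> V3 -> Prop) (g : R -> V3 -> R) : Prop :=
  cont_on D g /\
  match n with
  | 0%nat => True
  | S m => forall k, (k < 4)%nat -> exists dg : R -> V3 -> R,
             (forall t y, D t y -> partial g k t y (dg t y)) /\ Ck m D dg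
  end.

Definition fc (f : R -> V3 -> V3) (i : nat) : R -> V3 -> R := fun t y => cmp (f t y) i.

Definition C3_field (D : R -> V3 -> Prop) (f : R -> V3 -> V3) : Prop :=
  forall i, (i < 3)%nat -> Ck 3 D (fc f i).

Definition spatial_jacobian (f : R -> V3 -> V3) (t : R) (y : V3) (A : M3) : Prop :=
  forall i j, (i < 3)%nat -> (j < 3)%nat -> partial (fc f i) (S j) t y (A i j).

Definition incompressible (D : R -> V3 -> Prop) (f : R -> V3 -> V3) : Prop :=
  forall t y, D t y -> exists A, spatial_jacobian f t y A /\
    A 0%nat 0%nat + A 1%nat 1%nat + A 2%nat 2%nat = 0.

Definition is_flow_near (D : R -> V3 -> Prop) (f : R -> V3 -> V3)
    (phi : R -> R -> V3 -> V3) (t0 : R) (x : V3) : Prop :=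
  exists del r, 0 < del /\ 0 < r /\
    forall y, n1 (vsub y x) < r ->
      phi t0 t0 y = y /\
      forall tau, t0 - del < tau < t0 + del ->
        D tau (phi tau t0 y) /\
        forall i, (i < 3)%nat ->
          derivable_pt_lim (fun s => cmp (phi s t0 y) i) tau
                           (cmp (f tau (phi tau t0 y)) i).

Definition frechet_at (F : V3 -> V3) (x : V3) (A : M3) : Prop :=
  forall eps, 0 < eps -> exists del, 0 < del /\
    forall h, n1 h < del ->
      n1 (vsub (vsub (F (vadd x h)) (F x)) (mapply A h)) <= eps * n1 h.

Definition psi (phi : R -> R -> V3 -> V3) (t0 T : R) : V3 -> V3 :=
  fun y => phi (t0 + T) t0 y.

Definition mesohyperbolic (phi : R -> R -> V3 -> V3) (t0 T : R) (x : V3) : Prop :=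
  exists A, frechet_at (psi phi t0 T) x A /\ ~ has_unit_eigenvalue A.

(* Main.v *)
Require Import Defs.
From Stdlib Require Import Reals Lra Psatz FunctionalExtensionality IndefiniteDescription Classical List.
Open Scope R_scope.

Lemma le_eps (x y e0 C : R) : 0 < e0 -> 0 <= C ->
  (forall e, 0 < e < e0 -> x <= y + e * C) -> x <= y.
Proof.
  intros He0 HC H.
  destruct (Rle_or_lt x y) as [|Hlt]; [assumption|].
  set (e := Rmin (e0/2) ((x - y)/(2*(C+1)))).
  assert (He : 0 < e). { unfold e; apply Rmin_pos; [lra|]. apply Rdiv_lt_0_compat; lra. }
  assert (He1 : e <= e0/2) by (unfold e; apply Rmin_l).
  assert (He2 : e <= (x-y)/(2*(C+1))) by (unfold e; apply Rmin_r).
  specialize (H e ltac:(lra)).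
  assert (e * (2*(C+1)) <= x - y).
  { apply (Rmult_le_compat_r (2*(C+1))) in He2; [|lra].
    unfold Rdiv in He2. rewrite Rmult_assoc, Rinv_l in He2; lra. }
  nra.
Qed.

Lemma cont_eps (u : R -> R) t : continuity_pt u t ->
  forall eps, 0 < eps -> exists del, 0 < del /\ forall s, Rabs (s - t) < del -> Rabs (u s - u t) < eps.
Proof.
  intros Hc eps He. destruct (Hc eps He) as [del [Hd H]].
  exists del; split; [lra|]. intros s Hs.
  destruct (Req_dec s t) as [->|Hne]; [rewrite Rminus_diag, Rabs_R0; lra|].
  apply (H s). split; [split; [exact I| congruence]|exact Hs].
Qed.

Lemma barrier (u : R -> R) (a b K eta M0 al be : R) :
  a <= b -> 0 <= K -> 0 <= be ->
  (forall t, a <= t <= b -> continuity_pt u t) ->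
  u a <= al ->
  K * (al + be*(b-a)) + eta < be ->
  al + be*(b-a) <= M0 ->
  (forall t, a <= t < b -> u t <= M0 -> forall e, 0 < e -> exists h0, 0 < h0 /\
      forall h, 0 < h < h0 -> u (t+h) <= u t + h*(K * u t + eta + e)) ->
  forall t, a <= t <= b -> u t <= al + be*(t-a).
Proof.
  intros Hab HK Hbe Hc Ha Hgap HM Hd.
  set (w := fun t => al + be*(t-a)).
  set (E := fun t => a <= t <= b /\ forall s, a <= s <= t -> u s <= w s).
  assert (Ea : E a).
  { split; [lra|]. intros s Hs. replace s with a by lra. unfold w; lra. }
  assert (Hb : bound E). { exists b. intros t [Ht _]. lra. }
  destruct (completeness E Hb (ex_intro _ a Ea)) as [sg [Hub Hlub]].
  assert (Hsa : a <= sg) by (apply Hub; exact Ea).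
  assert (Hsb : sg <= b).
  { apply Hlub. intros t [Ht _]. lra. }
  assert (C1 : forall s, a <= s < sg -> u s <= w s).
  { intros s Hs.
    destruct (classic (exists t, E t /\ s < t)) as [[t [[_ Ht] Hst]]|Hn].
    - apply Ht; lra.
    - exfalso. assert (is_upper_bound E s).
      { intros t Et. destruct (Rle_or_lt t s); [assumption|]. exfalso; apply Hn; eauto. }
      specialize (Hlub s H). lra. }
  assert (C2 : u sg <= w sg).
  { destruct (Req_dec sg a) as [Heq|Hne].
    - rewrite Heq. unfold w; lra.
    - destruct (Rle_or_lt (u sg) (w sg)) as [|Hgt]; [assumption|exfalso].
      set (d := u sg - w sg).
      destruct (cont_eps u sg (Hc sg (conj Hsa Hsb)) (d/2) ltac:(unfold d; lra)) as [del [Hdel Hdel2]].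
      set (m := Rmin del (Rmin (sg - a) (d/(2*(be+1))))).
      assert (Hm : 0 < m).
      { unfold m. repeat apply Rmin_pos; try lra. apply Rdiv_lt_0_compat; unfold d; lra. }
      assert (Hm1 : m <= del) by (unfold m; apply Rmin_l).
      assert (Hm2 : m <= sg - a) by (unfold m; eapply Rle_trans; [apply Rmin_r|apply Rmin_l]).
      assert (Hm3 : m <= d/(2*(be+1))) by (unfold m; eapply Rle_trans; [apply Rmin_r|apply Rmin_r]).
      set (s := sg - m/2).
      assert (Hs : u s <= w s) by (apply C1; unfold s; lra).
      assert (Hus : Rabs (u s - u sg) < d/2).
      { apply Hdel2. unfold s. rewrite Rabs_left; lra. }
      assert (Hws : w s <= w sg) by (unfold w, s; nra).
      apply Rabs_def2 in Hus. destruct Hus. assert (d = u sg - w sg) by reflexivity. lra. }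
  assert (C3 : sg = b).
  { destruct (Req_dec sg b) as [|Hne]; [assumption|exfalso].
    assert (Hwsg : w sg <= al + be*(b-a)) by (unfold w; nra).
    set (e := be - K*(al+be*(b-a)) - eta).
    destruct (Hd sg ltac:(lra) ltac:(lra) (e/2) ltac:(unfold e; lra)) as [h0 [Hh0 Hh]].
    set (h1 := Rmin h0 (b - sg)).
    assert (Hh1 : 0 < h1) by (unfold h1; apply Rmin_pos; lra).
    assert (Hh1a : h1 <= h0) by apply Rmin_l.
    assert (Hh1b : h1 <= b - sg) by apply Rmin_r.
    assert (E (sg + h1/2)).
    { split; [lra|]. intros s Hs.
      destruct (Rlt_or_le s sg) as [Hl|Hl]; [apply C1; lra|].
      destruct (Req_dec s sg) as [He|He]; [subst s; exact C2|].
      replace s with (sg + (s - sg)) by ring.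
      assert (Hsp : 0 < s - sg < h0) by lra.
      specialize (Hh (s - sg) Hsp).
      assert (K * u sg <= K * (al + be*(b-a))) by (apply Rmult_le_compat_l; lra).
      assert (Hw2 : w (sg + (s - sg)) = w sg + (s - sg)*be) by (unfold w; ring).
      assert (He2 : e = be - K*(al+be*(b-a)) - eta) by reflexivity.
      assert (K * u sg + eta + e/2 <= be - e/2) by lra.
      assert ((s - sg) * (K * u sg + eta + e/2) <= (s-sg)*(be - e/2)) by (apply Rmult_le_compat_l; lra).
      rewrite Hw2. nra. }
    specialize (Hub _ H). lra. }
  intros t Ht. destruct (Rlt_or_le t sg) as [Hl|Hl].
  - apply C1; lra.
  - replace t with sg by lra. exact C2.
Qed.

Lemma gronwall (u : R -> R) (a b K eta al M0 : R) :
  a <= b -> 0 <= K -> 0 <= eta -> K*(b-a) <= 1/4 -> 0 <= al ->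
  (forall t, a <= t <= b -> continuity_pt u t) ->
  u a <= al ->
  al + 2*(K*al+eta)*(b-a) < M0 ->
  (forall t, a <= t < b -> u t <= M0 -> forall e, 0 < e -> exists h0, 0 < h0 /\
      forall h, 0 < h < h0 -> u (t+h) <= u t + h*(K * u t + eta + e)) ->
  forall t, a <= t <= b -> u t <= al + 2*(K*al+eta)*(t-a).
Proof.
  intros Hab HK Heta HKb Hal Hc Ha HM Hd t Ht.
  set (C := 1 + (2*K+1)*(b-a)).
  assert (HC : 1 <= C) by (unfold C; nra).
  apply (le_eps _ _ ((M0 - (al + 2*(K*al+eta)*(b-a)))/C) (1 + (2*K+1)*(t-a))).
  { apply Rdiv_lt_0_compat; lra. }
  { nra. }
  intros e He.
  assert (HeC : e * C < M0 - (al + 2*(K*al+eta)*(b-a))).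
  { destruct He as [He0 He1]. apply (Rmult_lt_compat_r C) in He1; [|lra].
    replace ((M0 - (al + 2 * (K * al + eta) * (b - a))) / C * C) with
      (M0 - (al + 2 * (K * al + eta) * (b - a))) in He1 by (field; lra). lra. }
  pose proof (barrier u a b K eta M0 (al+e) (2*(K*(al+e)+eta)+e) Hab HK
    ltac:(nra) Hc ltac:(lra)) as Hbar.
  assert (Hbe : 0 <= 2*(K*(al+e)+eta)+e) by nra.
  assert (Hx : K * (al + e + (2 * (K * (al + e) + eta) + e) * (b - a)) + eta <
               2 * (K * (al + e) + eta) + e).
  { assert (K * ((2 * (K * (al + e) + eta) + e) * (b - a)) <= (2 * (K * (al + e) + eta) + e)/4).
    { replace (K * ((2 * (K * (al + e) + eta) + e) * (b - a))) with
        ((2 * (K * (al + e) + eta) + e) * (K*(b-a))) by ring.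
      apply Rmult_le_compat_l with (r := (2 * (K * (al + e) + eta) + e)) in HKb; lra. }
    nra. }
  assert (Hy : al + e + (2 * (K * (al + e) + eta) + e) * (b - a) <= M0).
  { unfold C in HeC. nra. }
  specialize (Hbar Hx Hy Hd t Ht). nra.
Qed.

Lemma dini1 (F : R -> R) t l : derivable_pt_lim F t l ->
  forall e, 0 < e -> exists h0, 0 < h0 /\ forall h, 0 < h < h0 ->
    Rabs (F (t+h)) <= Rabs (F t) + h*(Rabs l + e).
Proof.
  intros Hd e He. destruct (Hd e He) as [del Hdel].
  exists del; split; [apply cond_pos|]. intros h Hh.
  assert (H1 := Hdel h ltac:(lra) ltac:(rewrite Rabs_pos_eq; lra)).
  assert (H2 : Rabs (F (t+h) - F t - h*l) <= h*e).
  { replace (F (t+h) - F t - h*l) with (h * ((F (t + h) - F t) / h - l)) by (field; lra).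
    rewrite Rabs_mult, (Rabs_pos_eq h) by lra. apply Rmult_le_compat_l; lra. }
  replace (F (t+h)) with (F t + h*l + (F (t+h) - F t - h*l)) by ring.
  eapply Rle_trans; [apply Rabs_triang|].
  eapply Rle_trans; [apply Rplus_le_compat_r; apply Rabs_triang|].
  rewrite Rabs_mult, (Rabs_pos_eq h) by lra. lra.
Qed.

Lemma dini_n1 (W : R -> V3) (d : V3) t :
  (forall k, (k < 3)%nat -> derivable_pt_lim (fun s => cmp (W s) k) t (cmp d k)) ->
  forall e, 0 < e -> exists h0, 0 < h0 /\ forall h, 0 < h < h0 ->
    n1 (W (t+h)) <= n1 (W t) + h*(n1 d + e).
Proof.
  intros Hd e He.
  destruct (dini1 _ _ _ (Hd 0%nat ltac:(lia)) (e/3) ltac:(lra)) as [h1 [Hh1 H1]].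
  destruct (dini1 _ _ _ (Hd 1%nat ltac:(lia)) (e/3) ltac:(lra)) as [h2 [Hh2 H2]].
  destruct (dini1 _ _ _ (Hd 2%nat ltac:(lia)) (e/3) ltac:(lra)) as [h3 [Hh3 H3]].
  exists (Rmin h1 (Rmin h2 h3)). split; [repeat apply Rmin_pos; lra|].
  intros h Hh.
  assert (h < h1) by (eapply Rlt_le_trans; [apply Hh|apply Rmin_l]).
  assert (h < h2) by (eapply Rlt_le_trans; [apply Hh|]; eapply Rle_trans; [apply Rmin_r|apply Rmin_l]).
  assert (h < h3) by (eapply Rlt_le_trans; [apply Hh|]; eapply Rle_trans; [apply Rmin_r|apply Rmin_r]).
  specialize (H1 h ltac:(lra)). specialize (H2 h ltac:(lra)). specialize (H3 h ltac:(lra)).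
  unfold n1. lra.
Qed.

Lemma n1_cont (W : R -> V3) t :
  (forall k, (k < 3)%nat -> continuity_pt (fun s => cmp (W s) k) t) ->
  continuity_pt (fun s => n1 (W s)) t.
Proof.
  intros H. unfold n1.
  assert (Hk : forall k, (k<3)%nat -> continuity_pt (fun s => Rabs (cmp (W s) k)) t).
  { intros k Hk. apply (continuity_pt_comp (fun s => cmp (W s) k) Rabs); [auto|apply Rcontinuity_abs]. }
  apply (continuity_pt_plus (fun s => Rabs (cmp (W s) 0) + Rabs (cmp (W s) 1)) (fun s => Rabs (cmp (W s) 2))).
  - apply (continuity_pt_plus (fun s => Rabs (cmp (W s) 0)) (fun s => Rabs (cmp (W s) 1))); apply Hk; lia.
  - apply Hk; lia.
Qed.

Definition cube (x : V3) (rho : R) (z : V3) : Prop :=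
  Rabs (cmp z 0 - cmp x 0) < rho /\ Rabs (cmp z 1 - cmp x 1) < rho /\ Rabs (cmp z 2 - cmp x 2) < rho.

Definition setk (z : V3) (k : nat) (t : R) : V3 :=
  match z with (a, b, c) => match k with 0%nat => (t, b, c) | 1%nat => (a, t, c) | _ => (a, b, t) end end.

Lemma step_bound (F F' : R -> R) a b M :
  (forall t, Rmin a b <= t <= Rmax a b -> derivable_pt_lim F t (F' t)) ->
  (forall t, Rmin a b <= t <= Rmax a b -> Rabs (F' t) <= M) ->
  Rabs (F b - F a) <= M * Rabs (b - a).
Proof.
  intros Hd Hb.
  destruct (Rtotal_order a b) as [Hlt|[Heq|Hgt]].
  - rewrite Rmin_left, Rmax_right in * by lra.
    destruct (MVT_cor2 F F' a b Hlt Hd) as [c [Hc Hc2]].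
    rewrite Hc, Rabs_mult. apply Rmult_le_compat_r; [apply Rabs_pos|apply Hb; lra].
  - subst. rewrite !Rminus_diag, Rabs_R0. rewrite Rmult_0_r; lra.
  - rewrite Rmin_right, Rmax_left in * by lra.
    destruct (MVT_cor2 F F' b a Hgt Hd) as [c [Hc Hc2]].
    rewrite <- Rabs_Ropp, Ropp_minus_distr, Hc, Rabs_mult, <- (Rabs_Ropp (b-a)), Ropp_minus_distr.
    apply Rmult_le_compat_r; [apply Rabs_pos|apply Hb; lra].
Qed.

Lemma between_in a b x0 rho t : Rabs (a - x0) < rho -> Rabs (b - x0) < rho ->
  Rmin a b <= t <= Rmax a b -> Rabs (t - x0) < rho.
Proof.
  intros Ha Hb Ht. apply Rabs_def2 in Ha. apply Rabs_def2 in Hb.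
  destruct (Rle_dec a b).
  - rewrite Rmin_left, Rmax_right in Ht by lra. apply Rabs_def1; lra.
  - rewrite Rmin_right, Rmax_left in Ht by lra. apply Rabs_def1; lra.
Qed.

Lemma between_abs a b t : Rmin a b <= t <= Rmax a b -> Rabs (t - a) <= Rabs (b - a).
Proof.
  intros Ht. destruct (Rle_dec a b).
  - rewrite Rmin_left, Rmax_right in Ht by lra. rewrite !Rabs_pos_eq; lra.
  - rewrite Rmin_right, Rmax_left in Ht by lra. rewrite !Rabs_left1; lra.
Qed.

Ltac cubetac := unfold cube; simpl; repeat split; try lra;
  eapply between_in; [| |eassumption]; assumption.

Definition line_deriv (x : V3) (rho : R) (h : V3 -> R) (H : nat -> V3 -> R) : Prop :=
  forall z k, cube x rho z -> (k < 3)%nat ->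
    derivable_pt_lim (fun t => h (setk z k t)) (cmp z k) (H k z).

Lemma fo_bound x rho (h : V3 -> R) (H : nat -> V3 -> R) M :
  line_deriv x rho h H ->
  (forall z k, cube x rho z -> (k < 3)%nat -> Rabs (H k z) <= M) ->
  forall z z', cube x rho z -> cube x rho z' -> Rabs (h z - h z') <= M * n1 (vsub z z').
Proof.
  intros Hd Hb z z' Hz Hz'.
  destruct x as [[x0 x1] x2]. destruct z as [[a b] c]. destruct z' as [[a' b'] c'].
  unfold cube in *; simpl in *. destruct Hz as [Ha [Hb' Hc]]. destruct Hz' as [Ha' [Hb'' Hc']].
  assert (S0 : Rabs (h (a,b',c') - h (a',b',c')) <= M * Rabs (a - a')).
  { apply (step_bound (fun t => h (t,b',c')) (fun t => H 0%nat (t,b',c'))).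
    - intros t Ht. apply (Hd (t,b',c') 0%nat); [cubetac|lia].
    - intros t Ht. apply Hb; [cubetac|lia]. }
  assert (S1 : Rabs (h (a,b,c') - h (a,b',c')) <= M * Rabs (b - b')).
  { apply (step_bound (fun t => h (a,t,c')) (fun t => H 1%nat (a,t,c'))).
    - intros t Ht. apply (Hd (a,t,c') 1%nat); [cubetac|lia].
    - intros t Ht. apply Hb; [cubetac|lia]. }
  assert (S2 : Rabs (h (a,b,c) - h (a,b,c')) <= M * Rabs (c - c')).
  { apply (step_bound (fun t => h (a,b,t)) (fun t => H 2%nat (a,b,t))).
    - intros t Ht. apply (Hd (a,b,t) 2%nat); [cubetac|lia].
    - intros t Ht. apply Hb; [cubetac|lia]. }
  unfold n1, vsub; simpl.
  replace (h (a,b,c) - h (a',b',c')) with ((h (a,b,c) - h (a,b,c')) + (h (a,b,c') - h (a,b',c'))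
     + (h (a,b',c') - h (a',b',c'))) by ring.
  eapply Rle_trans; [apply Rabs_triang|].
  eapply Rle_trans; [apply Rplus_le_compat_r; apply Rabs_triang|]. lra.
Qed.

Lemma dlin K x : derivable_pt_lim (fun t => t*K) x K.
Proof.
  assert (H := derivable_pt_lim_mult id (fct_cte K) x 1 0 (derivable_pt_lim_id x) (derivable_pt_lim_const K x)).
  unfold mult_fct, id, fct_cte in H. replace (1*K + x*0) with K in H by ring. exact H.
Qed.

Lemma step_lin (F F' : R -> R) K a b M :
  (forall t, Rmin a b <= t <= Rmax a b -> derivable_pt_lim F t (F' t)) ->
  (forall t, Rmin a b <= t <= Rmax a b -> Rabs (F' t - K) <= M) ->
  Rabs (F b - F a - (b - a) * K) <= M * Rabs (b - a).
Proof.
  intros Hd Hb.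
  replace (F b - F a - (b - a) * K) with ((F b - b*K) - (F a - a*K)) by ring.
  apply (step_bound (fun t => F t - t*K) (fun t => F' t - K)); [|exact Hb].
  intros t Ht. apply (derivable_pt_lim_minus F (fun t => t*K)); [auto|apply dlin].
Qed.

Lemma so_bound x rho (h : V3 -> R) (H : nat -> V3 -> R) (H2 : nat -> nat -> V3 -> R) M2 :
  line_deriv x rho h H ->
  (forall k, (k < 3)%nat -> line_deriv x rho (H k) (H2 k)) ->
  (forall z k j, cube x rho z -> (k < 3)%nat -> (j < 3)%nat -> Rabs (H2 k j z) <= M2) ->
  forall z z', cube x rho z -> cube x rho z' ->
  Rabs (h z - h z' - (H 0%nat z' * (cmp z 0 - cmp z' 0) + H 1%nat z' * (cmp z 1 - cmp z' 1)
        + H 2%nat z' * (cmp z 2 - cmp z' 2))) <= M2 * n1 (vsub z z') * n1 (vsub z z').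
Proof.
  intros Hd Hd2 Hb z z' Hz Hz'.
  assert (Hfo : forall k q, (k < 3)%nat -> cube x rho q ->
            Rabs (H k q - H k z') <= M2 * n1 (vsub q z')).
  { intros k q Hk Hq. apply (fo_bound x rho (H k) (H2 k)); auto. }
  destruct x as [[x0 x1] x2]. destruct z as [[a b] c]. destruct z' as [[a' b'] c'].
  pose proof Hz as Hz0. pose proof Hz' as Hz0'.
  unfold cube in Hz, Hz'; simpl in *. destruct Hz as [Ha [Hb' Hc]]. destruct Hz' as [Ha' [Hb'' Hc']].
  set (N := Rabs (a - a') + Rabs (b - b') + Rabs (c - c')).
  assert (S0 : Rabs (h (a,b',c') - h (a',b',c') - (a - a') * H 0%nat (a',b',c')) <= M2 * N * Rabs (a - a')).
  { apply (step_lin (fun t => h (t,b',c')) (fun t => H 0%nat (t,b',c'))).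
    - intros t Ht. apply (Hd (t,b',c') 0%nat); [cubetac|lia].
    - intros t Ht. eapply Rle_trans; [apply Hfo; [lia|cubetac]|].
      unfold n1, vsub; simpl. apply Rmult_le_compat_l.
      + eapply Rle_trans; [apply Rabs_pos|apply (Hb (a,b,c) 0%nat 0%nat Hz0); lia].
      + pose proof (between_abs a' a t Ht).
        unfold N. rewrite !Rminus_diag, Rabs_R0.
        pose proof (Rabs_pos (b-b')). pose proof (Rabs_pos (c-c')). lra. }
  assert (S1 : Rabs (h (a,b,c') - h (a,b',c') - (b - b') * H 1%nat (a',b',c')) <= M2 * N * Rabs (b - b')).
  { apply (step_lin (fun t => h (a,t,c')) (fun t => H 1%nat (a,t,c'))).
    - intros t Ht. apply (Hd (a,t,c') 1%nat); [cubetac|lia].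
    - intros t Ht. eapply Rle_trans; [apply Hfo; [lia|cubetac]|].
      unfold n1, vsub; simpl. apply Rmult_le_compat_l.
      + eapply Rle_trans; [apply Rabs_pos|apply (Hb (a,b,c) 0%nat 0%nat Hz0); lia].
      + pose proof (between_abs b' b t Ht).
        unfold N. rewrite !Rminus_diag, Rabs_R0.
        pose proof (Rabs_pos (c-c')). lra. }
  assert (S2 : Rabs (h (a,b,c) - h (a,b,c') - (c - c') * H 2%nat (a',b',c')) <= M2 * N * Rabs (c - c')).
  { apply (step_lin (fun t => h (a,b,t)) (fun t => H 2%nat (a,b,t))).
    - intros t Ht. apply (Hd (a,b,t) 2%nat); [cubetac|lia].
    - intros t Ht. eapply Rle_trans; [apply Hfo; [lia|cubetac]|].
      unfold n1, vsub; simpl. apply Rmult_le_compat_l.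
      + eapply Rle_trans; [apply Rabs_pos|apply (Hb (a,b,c) 0%nat 0%nat Hz0); lia].
      + pose proof (between_abs c' c t Ht).
        unfold N. lra. }
  unfold n1, vsub; simpl. fold N.
  replace (h (a,b,c) - h (a',b',c') - (H 0%nat (a',b',c') * (a - a') + H 1%nat (a',b',c') * (b - b')
     + H 2%nat (a',b',c') * (c - c'))) with
    ((h (a,b,c) - h (a,b,c') - (c - c') * H 2%nat (a',b',c')) +
     (h (a,b,c') - h (a,b',c') - (b - b') * H 1%nat (a',b',c')) +
     (h (a,b',c') - h (a',b',c') - (a - a') * H 0%nat (a',b',c'))) by ring.
  eapply Rle_trans; [apply Rabs_triang|].
  eapply Rle_trans; [apply Rplus_le_compat_r; apply Rabs_triang|].
  unfold N in *. lra.
Qed.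

Definition cR := (R*R)%type.
Definition cm (p q : cR) : cR := (fst p * fst q - snd p * snd q, fst p * snd q + snd p * fst q).
Definition ca (p q : cR) : cR := (fst p + fst q, snd p + snd q).
Definition cs (p q : cR) : cR := (fst p - fst q, snd p - snd q).
Definition cabs1 (p : cR) : R := Rabs (fst p) + Rabs (snd p).

Definition det3c (m00 m01 m02 m10 m11 m12 m20 m21 m22 : cR) : cR :=
  cs (ca (cm m00 (cs (cm m11 m22) (cm m12 m21)))
         (cm m02 (cs (cm m10 m21) (cm m11 m20))))
     (cm m01 (cs (cm m10 m22) (cm m12 m20))).

Lemma adj_identity (m00 m01 m02 m10 m11 m12 m20 m21 m22 v0 v1 v2 : cR) :
  let d := det3c m00 m01 m02 m10 m11 m12 m20 m21 m22 in
  let r0 := ca (ca (cm m00 v0) (cm m01 v1)) (cm m02 v2) in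
  let r1 := ca (ca (cm m10 v0) (cm m11 v1)) (cm m12 v2) in
  let r2 := ca (ca (cm m20 v0) (cm m21 v1)) (cm m22 v2) in
  cm d v0 = ca (ca (cm (cs (cm m11 m22) (cm m12 m21)) r0) (cm (cs (cm m02 m21) (cm m01 m22)) r1))
               (cm (cs (cm m01 m12) (cm m02 m11)) r2) /\
  cm d v1 = ca (ca (cm (cs (cm m12 m20) (cm m10 m22)) r0) (cm (cs (cm m00 m22) (cm m02 m20)) r1))
               (cm (cs (cm m02 m10) (cm m00 m12)) r2) /\
  cm d v2 = ca (ca (cm (cs (cm m10 m21) (cm m11 m20)) r0) (cm (cs (cm m01 m20) (cm m00 m21)) r1))
               (cm (cs (cm m00 m11) (cm m01 m10)) r2).
Proof.
  destruct m00, m01, m02, m10, m11, m12, m20, m21, m22, v0, v1, v2.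
  unfold det3c, cm, ca, cs; simpl. repeat split; f_equal; ring.
Qed.

Lemma cabs1_ge0 p : 0 <= cabs1 p.
Proof. unfold cabs1. pose proof (Rabs_pos (fst p)). pose proof (Rabs_pos (snd p)). lra. Qed.

Lemma cabs1_mul p q : cabs1 (cm p q) <= cabs1 p * cabs1 q.
Proof.
  destruct p as [a b], q as [c d]. unfold cabs1, cm; simpl.
  pose proof (Rabs_triang (a*c) (- (b*d))). pose proof (Rabs_triang (a*d) (b*c)).
  rewrite Rabs_Ropp in H. unfold Rminus. rewrite !Rabs_mult in *. nra.
Qed.

Lemma cabs1_add p q : cabs1 (ca p q) <= cabs1 p + cabs1 q.
Proof.
  destruct p as [a b], q as [c d]. unfold cabs1, ca; simpl.
  pose proof (Rabs_triang a c). pose proof (Rabs_triang b d). lra.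
Qed.

Lemma cabs1_sub p q : cabs1 (cs p q) <= cabs1 p + cabs1 q.
Proof.
  destruct p as [a b], q as [c d]. unfold cabs1, cs; simpl.
  pose proof (Rabs_triang a (-c)). pose proof (Rabs_triang b (-d)).
  rewrite Rabs_Ropp in *. unfold Rminus. lra.
Qed.

Lemma cabs1_low d v : Rabs (fst d) * cabs1 v <= 2 * cabs1 (cm d v).
Proof.
  destruct d as [d1 d2], v as [v1 v2]. unfold cabs1, cm; simpl.
  set (p := d1*v1 - d2*v2). set (q := d1*v2 + d2*v1).
  assert (Hpq : p*p + q*q = (d1*d1+d2*d2)*(v1*v1+v2*v2)) by (unfold p, q; ring).
  pose proof (Rabs_pos p). pose proof (Rabs_pos q). pose proof (Rabs_pos d1).
  pose proof (Rabs_pos v1). pose proof (Rabs_pos v2).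
  assert (E1 : Rabs p * Rabs p = p*p) by (rewrite <- Rabs_mult; apply Rabs_pos_eq; nra).
  assert (E2 : Rabs q * Rabs q = q*q) by (rewrite <- Rabs_mult; apply Rabs_pos_eq; nra).
  assert (E3 : Rabs d1 * Rabs d1 = d1*d1) by (rewrite <- Rabs_mult; apply Rabs_pos_eq; nra).
  assert (E4 : Rabs v1 * Rabs v1 = v1*v1) by (rewrite <- Rabs_mult; apply Rabs_pos_eq; nra).
  assert (E5 : Rabs v2 * Rabs v2 = v2*v2) by (rewrite <- Rabs_mult; apply Rabs_pos_eq; nra).
  set (X := Rabs p + Rabs q). set (Y := Rabs d1 * (Rabs v1 + Rabs v2)).
  assert (HX : 0 <= X) by (unfold X; lra).
  assert (HY : 0 <= Y) by (unfold Y; nra).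
  assert (HXX : p*p + q*q <= X*X).
  { unfold X. replace ((Rabs p + Rabs q) * (Rabs p + Rabs q)) with
      (Rabs p * Rabs p + Rabs q * Rabs q + 2 * (Rabs p * Rabs q)) by ring.
    rewrite E1, E2. assert (0 <= Rabs p * Rabs q) by (apply Rmult_le_pos; lra). lra. }
  assert (HYY : Y*Y <= 2*((d1*d1)*(v1*v1+v2*v2))).
  { unfold Y. replace (Rabs d1 * (Rabs v1 + Rabs v2) * (Rabs d1 * (Rabs v1 + Rabs v2))) with
      ((Rabs d1 * Rabs d1) * ((Rabs v1 + Rabs v2)*(Rabs v1 + Rabs v2))) by ring.
    rewrite E3. assert ((Rabs v1 + Rabs v2)*(Rabs v1 + Rabs v2) <= 2*(v1*v1+v2*v2)).
    { rewrite <- E4, <- E5. pose proof (Rle_0_sqr (Rabs v1 - Rabs v2)). unfold Rsqr in *. lra. }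
    assert (0 <= d1*d1) by nra. nra. }
  assert (Y*Y <= 2*(X*X)) by nra.
  nra.
Qed.

Lemma adj_entry_bound p q p' q' B : cabs1 p <= B -> cabs1 q <= B -> cabs1 p' <= B -> cabs1 q' <= B ->
  cabs1 (cs (cm p q) (cm p' q')) <= 2*B*B.
Proof.
  intros H1 H2 H3 H4. eapply Rle_trans; [apply cabs1_sub|].
  pose proof (cabs1_mul p q). pose proof (cabs1_mul p' q').
  pose proof (cabs1_ge0 p). pose proof (cabs1_ge0 q). pose proof (cabs1_ge0 p'). pose proof (cabs1_ge0 q').
  assert (cabs1 p * cabs1 q <= B*B) by (apply Rmult_le_compat; lra).
  assert (cabs1 p' * cabs1 q' <= B*B) by (apply Rmult_le_compat; lra). lra.
Qed.

Lemma combo_bound x0 x1 x2 r0 r1 r2 C : cabs1 x0 <= C -> cabs1 x1 <= C -> cabs1 x2 <= C ->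
  cabs1 (ca (ca (cm x0 r0) (cm x1 r1)) (cm x2 r2)) <= C * (cabs1 r0 + cabs1 r1 + cabs1 r2).
Proof.
  intros H0 H1 H2.
  eapply Rle_trans; [apply cabs1_add|].
  eapply Rle_trans; [apply Rplus_le_compat_r; apply cabs1_add|].
  pose proof (cabs1_mul x0 r0). pose proof (cabs1_mul x1 r1). pose proof (cabs1_mul x2 r2).
  pose proof (cabs1_ge0 r0). pose proof (cabs1_ge0 r1). pose proof (cabs1_ge0 r2).
  assert (cabs1 x0 * cabs1 r0 <= C * cabs1 r0) by (apply Rmult_le_compat_r; lra).
  assert (cabs1 x1 * cabs1 r1 <= C * cabs1 r1) by (apply Rmult_le_compat_r; lra).
  assert (cabs1 x2 * cabs1 r2 <= C * cabs1 r2) by (apply Rmult_le_compat_r; lra).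
  lra.
Qed.

Definition KA (A : M3) : R :=
  Rabs (A 0%nat 0%nat) + Rabs (A 0%nat 1%nat) + Rabs (A 0%nat 2%nat) +
  Rabs (A 1%nat 0%nat) + Rabs (A 1%nat 1%nat) + Rabs (A 1%nat 2%nat) +
  Rabs (A 2%nat 0%nat) + Rabs (A 2%nat 1%nat) + Rabs (A 2%nat 2%nat).

Lemma KA_entry A i j : (i < 3)%nat -> (j < 3)%nat -> Rabs (A i j) <= KA A.
Proof.
  intros Hi Hj. unfold KA.
  pose proof (Rabs_pos (A 0%nat 0%nat)); pose proof (Rabs_pos (A 0%nat 1%nat)); pose proof (Rabs_pos (A 0%nat 2%nat));
  pose proof (Rabs_pos (A 1%nat 0%nat)); pose proof (Rabs_pos (A 1%nat 1%nat)); pose proof (Rabs_pos (A 1%nat 2%nat));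
  pose proof (Rabs_pos (A 2%nat 0%nat)); pose proof (Rabs_pos (A 2%nat 1%nat)); pose proof (Rabs_pos (A 2%nat 2%nat)).
  destruct i as [|[|[|i]]]; try lia; destruct j as [|[|[|j]]]; try lia; lra.
Qed.

Lemma KA_ge0 A : 0 <= KA A.
Proof. pose proof (KA_entry A 0 0 ltac:(lia) ltac:(lia)). pose proof (Rabs_pos (A 0%nat 0%nat)). lra. Qed.

Lemma row_bound a0 a1 a2 x0 x1 x2 : Rabs (a0*x0 + a1*x1 + a2*x2) <=
  (Rabs a0 + Rabs a1 + Rabs a2) * (Rabs x0 + Rabs x1 + Rabs x2).
Proof.
  pose proof (Rabs_triang (a0*x0 + a1*x1) (a2*x2)). pose proof (Rabs_triang (a0*x0) (a1*x1)).
  rewrite !Rabs_mult in *.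
  pose proof (Rabs_pos a0); pose proof (Rabs_pos a1); pose proof (Rabs_pos a2);
  pose proof (Rabs_pos x0); pose proof (Rabs_pos x1); pose proof (Rabs_pos x2). nra.
Qed.

Lemma mapply_n1 A v : n1 (mapply A v) <= KA A * n1 v.
Proof.
  destruct v as [[v0 v1] v2]. unfold n1, mapply, mrow, KA; simpl.
  pose proof (row_bound (A 0%nat 0%nat) (A 0%nat 1%nat) (A 0%nat 2%nat) v0 v1 v2).
  pose proof (row_bound (A 1%nat 0%nat) (A 1%nat 1%nat) (A 1%nat 2%nat) v0 v1 v2).
  pose proof (row_bound (A 2%nat 0%nat) (A 2%nat 1%nat) (A 2%nat 2%nat) v0 v1 v2). lra.
Qed.

Lemma sq6 x1 x2 x3 x4 x5 x6 : 
  x1*x1+x2*x2+x3*x3+x4*x4+x5*x5+x6*x6 <= (Rabs x1+Rabs x2+Rabs x3+Rabs x4+Rabs x5+Rabs x6)^2.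
Proof.
  assert (forall y, y*y = Rabs y * Rabs y) by (intro y; rewrite <- Rabs_mult; rewrite Rabs_pos_eq; nra).
  rewrite (H x1), (H x2), (H x3), (H x4), (H x5), (H x6).
  pose proof (Rabs_pos x1); pose proof (Rabs_pos x2); pose proof (Rabs_pos x3);
  pose proof (Rabs_pos x4); pose proof (Rabs_pos x5); pose proof (Rabs_pos x6).
  set (a1 := Rabs x1) in *; set (a2 := Rabs x2) in *; set (a3 := Rabs x3) in *;
  set (a4 := Rabs x4) in *; set (a5 := Rabs x5) in *; set (a6 := Rabs x6) in *.
  nra.
Qed.
Lemma cs6 x1 x2 x3 x4 x5 x6 : 
  (Rabs x1+Rabs x2+Rabs x3+Rabs x4+Rabs x5+Rabs x6)^2 <= 6*(x1*x1+x2*x2+x3*x3+x4*x4+x5*x5+x6*x6).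
Proof.
  assert (forall y, y*y = Rabs y * Rabs y) by (intro y; rewrite <- Rabs_mult; rewrite Rabs_pos_eq; nra).
  rewrite (H x1), (H x2), (H x3), (H x4), (H x5), (H x6).
  set (a1 := Rabs x1) in *; set (a2 := Rabs x2) in *; set (a3 := Rabs x3) in *;
  set (a4 := Rabs x4) in *; set (a5 := Rabs x5) in *; set (a6 := Rabs x6) in *.
  assert (E : 6*(a1*a1+a2*a2+a3*a3+a4*a4+a5*a5+a6*a6) - (a1+a2+a3+a4+a5+a6)^2 = (a1-a2)*(a1-a2) + (a1-a3)*(a1-a3) + (a1-a4)*(a1-a4) + (a1-a5)*(a1-a5) + (a1-a6)*(a1-a6) + (a2-a3)*(a2-a3) + (a2-a4)*(a2-a4) + (a2-a5)*(a2-a5) + (a2-a6)*(a2-a6) + (a3-a4)*(a3-a4) + (a3-a5)*(a3-a5) + (a3-a6)*(a3-a6) + (a4-a5)*(a4-a5) + (a4-a6)*(a4-a6) + (a5-a6)*(a5-a6)) by ring.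
  pose proof (Rle_0_sqr (a1-a2)).
  pose proof (Rle_0_sqr (a1-a3)).
  pose proof (Rle_0_sqr (a1-a4)).
  pose proof (Rle_0_sqr (a1-a5)).
  pose proof (Rle_0_sqr (a1-a6)).
  pose proof (Rle_0_sqr (a2-a3)).
  pose proof (Rle_0_sqr (a2-a4)).
  pose proof (Rle_0_sqr (a2-a5)).
  pose proof (Rle_0_sqr (a2-a6)).
  pose proof (Rle_0_sqr (a3-a4)).
  pose proof (Rle_0_sqr (a3-a5)).
  pose proof (Rle_0_sqr (a3-a6)).
  pose proof (Rle_0_sqr (a4-a5)).
  pose proof (Rle_0_sqr (a4-a6)).
  pose proof (Rle_0_sqr (a5-a6)).
  unfold Rsqr in *. lra.
Qed.

Lemma n1_scal c v : n1 (vscal c v) = Rabs c * n1 v.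
Proof. destruct v as [[a b] d]. unfold n1, vscal; simpl. rewrite !Rabs_mult. ring. Qed.

Lemma n1_ge0 v : 0 <= n1 v.
Proof. unfold n1. pose proof (Rabs_pos (cmp v 0)); pose proof (Rabs_pos (cmp v 1)); pose proof (Rabs_pos (cmp v 2)). lra. Qed.

Ltac v3eq := apply f_equal2; [apply f_equal2|].

Definition c1 (A : M3) : R :=
  A 0%nat 0%nat * A 1%nat 1%nat - A 0%nat 1%nat * A 1%nat 0%nat
  + A 0%nat 0%nat * A 2%nat 2%nat - A 0%nat 2%nat * A 2%nat 0%nat
  + A 1%nat 1%nat * A 2%nat 2%nat - A 1%nat 2%nat * A 2%nat 1%nat.

Lemma eigen_main (A : M3) : A 0%nat 0%nat + A 1%nat 1%nat + A 2%nat 2%nat = 0 -> det3 A <> 0 ->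
  exists eps T2, 0 < eps /\ 0 < T2 /\ forall T J, 0 < T < T2 ->
   (forall v, n1 (vsub (vsub (mapply J v) v) (vscal T (mapply A v))) <= eps * T * n1 v) ->
   ~ has_unit_eigenvalue J.
Proof.
  intros Htr Hdet.
  set (K := KA A). set (R := 3*(K+1)). set (B := K + 2*R). set (Cad := 2*B*B).
  set (c := c1 A). set (dA := det3 A).
  assert (HK : 0 <= K) by apply KA_ge0.
  assert (HR : 3 <= R) by (unfold R; lra).
  assert (HB : 0 < B) by (unfold B; lra).
  assert (HCad : 0 < Cad) by (unfold Cad; nra).
  assert (HdA : 0 < Rabs dA) by (apply Rabs_pos_lt; exact Hdet).
  assert (Hden : 0 < R*R*(3*R*R+Rabs c)+1) by (pose proof (Rabs_pos c); nra).
  set (eps := Rmin 1 (Rabs dA/(24*Cad))).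
  assert (Heps : 0 < eps) by (unfold eps; apply Rmin_pos; [lra|apply Rdiv_lt_0_compat; lra]).
  assert (Heps1 : eps <= 1) by apply Rmin_l.
  assert (Heps2 : 24*Cad*eps <= Rabs dA).
  { assert (eps <= Rabs dA/(24*Cad)) by apply Rmin_r.
    apply (Rmult_le_compat_l (24*Cad)) in H; [|lra].
    replace (24 * Cad * (Rabs dA / (24 * Cad))) with (Rabs dA) in H by (field; lra). lra. }
  exists eps, (Rabs dA / (R*R*(3*R*R+Rabs c)+1)).
  split; [exact Heps|]. split; [apply Rdiv_lt_0_compat; lra|].
  intros T J HT HJ [a [b [u [w [Hab [Hnz [Hu Hw]]]]]]].
  assert (HT2 : T * (R*R*(3*R*R+Rabs c)+1) < Rabs dA).
  { destruct HT as [HT0 HT1]. apply (Rmult_lt_compat_r (R*R*(3*R*R+Rabs c)+1)) in HT1; [|lra].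
    replace (Rabs dA / (R * R * (3 * R * R + Rabs c) + 1) * (R * R * (3 * R * R + Rabs c) + 1))
      with (Rabs dA) in HT1 by (field; lra). lra. }
  set (al := (a-1)/T). set (be := b/T).
  assert (Ha : a = 1 + T*al) by (unfold al; field; lra).
  assert (Hb : b = T*be) by (unfold be; field; lra).
  destruct u as [[u0 u1] u2], w as [[w0 w1] w2].
  set (a00 := A 0%nat 0%nat) in *. set (a01 := A 0%nat 1%nat) in *. set (a02 := A 0%nat 2%nat) in *.
  set (a10 := A 1%nat 0%nat) in *. set (a11 := A 1%nat 1%nat) in *. set (a12 := A 1%nat 2%nat) in *.
  set (a20 := A 2%nat 0%nat) in *. set (a21 := A 2%nat 1%nat) in *. set (a22 := A 2%nat 2%nat) in *.
  set (ru0 := a00*u0 + a01*u1 + a02*u2 - al*u0 + be*w0).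
  set (ru1 := a10*u0 + a11*u1 + a12*u2 - al*u1 + be*w1).
  set (ru2 := a20*u0 + a21*u1 + a22*u2 - al*u2 + be*w2).
  set (rw0 := a00*w0 + a01*w1 + a02*w2 - be*u0 - al*w0).
  set (rw1 := a10*w0 + a11*w1 + a12*w2 - be*u1 - al*w1).
  set (rw2 := a20*w0 + a21*w1 + a22*w2 - be*u2 - al*w2).
  assert (Eu : vsub (vsub (mapply J (u0,u1,u2)) (u0,u1,u2)) (vscal T (mapply A (u0,u1,u2)))
               = vscal (-T) (ru0, ru1, ru2)).
  { rewrite Hu. unfold vsub, vscal, mapply, mrow; simpl. fold a00 a01 a02 a10 a11 a12 a20 a21 a22.
    rewrite Ha, Hb. unfold ru0, ru1, ru2. v3eq; ring. }
  assert (Ew : vsub (vsub (mapply J (w0,w1,w2)) (w0,w1,w2)) (vscal T (mapply A (w0,w1,w2)))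
               = vscal (-T) (rw0, rw1, rw2)).
  { rewrite Hw. unfold vsub, vscal, mapply, mrow; simpl. fold a00 a01 a02 a10 a11 a12 a20 a21 a22.
    rewrite Ha, Hb. unfold rw0, rw1, rw2. v3eq; ring. }
  pose proof (HJ (u0,u1,u2)) as Ju. pose proof (HJ (w0,w1,w2)) as Jw.
  rewrite Eu, n1_scal in Ju. rewrite Ew, n1_scal in Jw.
  rewrite Rabs_Ropp, Rabs_pos_eq in Ju, Jw by lra.
  assert (Su : n1 (ru0,ru1,ru2) <= eps * n1 (u0,u1,u2)).
  { apply (Rmult_le_reg_l T); [lra|]. lra. }
  assert (Sw : n1 (rw0,rw1,rw2) <= eps * n1 (w0,w1,w2)).
  { apply (Rmult_le_reg_l T); [lra|]. lra. }
  clear Ju Jw Eu Ew HJ Hu Hw.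
  unfold n1 in Su, Sw; simpl in Su, Sw.
  set (N := Rabs u0 + Rabs u1 + Rabs u2 + (Rabs w0 + Rabs w1 + Rabs w2)).
  set (S := u0*u0+u1*u1+u2*u2+w0*w0+w1*w1+w2*w2).
  assert (HS : 0 < S).
  { destruct Hnz as [Hn|Hn].
    - destruct (Req_dec u0 0) as [Z0|Z0]; [destruct (Req_dec u1 0) as [Z1|Z1]; [destruct (Req_dec u2 0) as [Z2|Z2]|]|].
      + exfalso; apply Hn; rewrite Z0, Z1, Z2; reflexivity.
      + unfold S; nra.
      + unfold S; nra.
      + unfold S; nra.
    - destruct (Req_dec w0 0) as [Z0|Z0]; [destruct (Req_dec w1 0) as [Z1|Z1]; [destruct (Req_dec w2 0) as [Z2|Z2]|]|].
      + exfalso; apply Hn; rewrite Z0, Z1, Z2; reflexivity.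
      + unfold S; nra.
      + unfold S; nra.
      + unfold S; nra. }
  assert (HAu : Rabs (a00*u0 + a01*u1 + a02*u2) + Rabs (a10*u0 + a11*u1 + a12*u2) + Rabs (a20*u0 + a21*u1 + a22*u2)
                <= K * (Rabs u0 + Rabs u1 + Rabs u2)).
  { pose proof (mapply_n1 A (u0,u1,u2)) as H. unfold n1, mapply, mrow in H; simpl in H. exact H. }
  assert (HAw : Rabs (a00*w0 + a01*w1 + a02*w2) + Rabs (a10*w0 + a11*w1 + a12*w2) + Rabs (a20*w0 + a21*w1 + a22*w2)
                <= K * (Rabs w0 + Rabs w1 + Rabs w2)).
  { pose proof (mapply_n1 A (w0,w1,w2)) as H. unfold n1, mapply, mrow in H; simpl in H. exact H. }
  assert (HP : Rabs (al*u0 - be*w0) + Rabs (al*u1 - be*w1) + Rabs (al*u2 - be*w2)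
             + Rabs (al*w0 + be*u0) + Rabs (al*w1 + be*u1) + Rabs (al*w2 + be*u2) <= (K+1)*N).
  { assert (T1 : forall p r, Rabs (p - r) <= Rabs p + Rabs r).
    { intros p r. unfold Rminus. eapply Rle_trans; [apply Rabs_triang|]. rewrite Rabs_Ropp. lra. }
    replace (al*u0 - be*w0) with ((a00*u0 + a01*u1 + a02*u2) - ru0) by (unfold ru0; ring).
    replace (al*u1 - be*w1) with ((a10*u0 + a11*u1 + a12*u2) - ru1) by (unfold ru1; ring).
    replace (al*u2 - be*w2) with ((a20*u0 + a21*u1 + a22*u2) - ru2) by (unfold ru2; ring).
    replace (al*w0 + be*u0) with ((a00*w0 + a01*w1 + a02*w2) - rw0) by (unfold rw0; ring).
    replace (al*w1 + be*u1) with ((a10*w0 + a11*w1 + a12*w2) - rw1) by (unfold rw1; ring).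
    replace (al*w2 + be*u2) with ((a20*w0 + a21*w1 + a22*w2) - rw2) by (unfold rw2; ring).
    pose proof (T1 (a00*u0 + a01*u1 + a02*u2) ru0). pose proof (T1 (a10*u0 + a11*u1 + a12*u2) ru1).
    pose proof (T1 (a20*u0 + a21*u1 + a22*u2) ru2). pose proof (T1 (a00*w0 + a01*w1 + a02*w2) rw0).
    pose proof (T1 (a10*w0 + a11*w1 + a12*w2) rw1). pose proof (T1 (a20*w0 + a21*w1 + a22*w2) rw2).
    assert (0 <= Rabs u0 + Rabs u1 + Rabs u2) by (pose proof (Rabs_pos u0); pose proof (Rabs_pos u1); pose proof (Rabs_pos u2); lra).
    assert (0 <= Rabs w0 + Rabs w1 + Rabs w2) by (pose proof (Rabs_pos w0); pose proof (Rabs_pos w1); pose proof (Rabs_pos w2); lra).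
    assert (eps * (Rabs u0 + Rabs u1 + Rabs u2) <= 1 * (Rabs u0 + Rabs u1 + Rabs u2)) by (apply Rmult_le_compat_r; lra).
    assert (eps * (Rabs w0 + Rabs w1 + Rabs w2) <= 1 * (Rabs w0 + Rabs w1 + Rabs w2)) by (apply Rmult_le_compat_r; lra).
    unfold N. lra. }
  assert (Hmu : al*al + be*be <= R*R).
  { pose proof (sq6 (al*u0 - be*w0) (al*u1 - be*w1) (al*u2 - be*w2) (al*w0 + be*u0) (al*w1 + be*u1) (al*w2 + be*u2)) as Q1.
    pose proof (cs6 u0 u1 u2 w0 w1 w2) as Q2.
    assert (EQ : (al*u0 - be*w0)*(al*u0 - be*w0) + (al*u1 - be*w1)*(al*u1 - be*w1) + (al*u2 - be*w2)*(al*u2 - be*w2)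
       + (al*w0 + be*u0)*(al*w0 + be*u0) + (al*w1 + be*u1)*(al*w1 + be*u1) + (al*w2 + be*u2)*(al*w2 + be*u2)
       = (al*al+be*be)*S) by (unfold S; ring).
    rewrite EQ in Q1.
    assert (HN : 0 <= N) by (unfold N; pose proof (Rabs_pos u0); pose proof (Rabs_pos u1); pose proof (Rabs_pos u2);
       pose proof (Rabs_pos w0); pose proof (Rabs_pos w1); pose proof (Rabs_pos w2); lra).
    set (P := Rabs (al*u0 - be*w0) + Rabs (al*u1 - be*w1) + Rabs (al*u2 - be*w2)
             + Rabs (al*w0 + be*u0) + Rabs (al*w1 + be*u1) + Rabs (al*w2 + be*u2)) in *.
    assert (HP0 : 0 <= P) by (unfold P; repeat (apply Rplus_le_le_0_compat); apply Rabs_pos).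
    assert (P^2 <= ((K+1)*N)^2) by (apply pow_incr; lra).
    replace (Rabs u0 + Rabs u1 + Rabs u2 + Rabs w0 + Rabs w1 + Rabs w2) with N in Q2 by (unfold N; ring).
    fold S in Q2.
    assert ((al*al+be*be)*S <= (K+1)*(K+1)*(6*S)) by nra.
    assert (al*al+be*be <= 6*(K+1)*(K+1)).
    { apply (Rmult_le_reg_r S); [lra|]. nra. }
    unfold R. nra. }
  assert (Hal : al = - T*(al*al+be*be)/2).
  { rewrite Ha, Hb in Hab. apply (Rmult_eq_reg_l (2*T)); [|lra]. field_simplify; nra. }
  assert (Halb : Rabs al <= T*(R*R)/2).
  { rewrite Hal. rewrite Rabs_left1.
    - assert (0 <= al*al+be*be) by nra. nra.
    - assert (0 <= al*al+be*be) by nra. nra. }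
  assert (Hab1 : Rabs al <= R).
  { assert (0 <= al*al) by nra. assert (0 <= be*be) by nra. apply Rabs_le; split; nra. }
  assert (Hbb1 : Rabs be <= R).
  { assert (0 <= al*al) by nra. assert (0 <= be*be) by nra. apply Rabs_le; split; nra. }
  set (m00 := (a00 - al, - be) : cR). set (m11 := (a11 - al, - be) : cR). set (m22 := (a22 - al, - be) : cR).
  set (m01 := (a01, 0) : cR). set (m02 := (a02, 0) : cR). set (m10 := (a10, 0) : cR).
  set (m12 := (a12, 0) : cR). set (m20 := (a20, 0) : cR). set (m21 := (a21, 0) : cR).
  assert (Hr0 : ca (ca (cm m00 (u0,w0)) (cm m01 (u1,w1))) (cm m02 (u2,w2)) = (ru0, rw0))
    by (unfold m00, m01, m02, cm, ca, ru0, rw0; simpl; f_equal; ring).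
  assert (Hr1 : ca (ca (cm m10 (u0,w0)) (cm m11 (u1,w1))) (cm m12 (u2,w2)) = (ru1, rw1))
    by (unfold m10, m11, m12, cm, ca, ru1, rw1; simpl; f_equal; ring).
  assert (Hr2 : ca (ca (cm m20 (u0,w0)) (cm m21 (u1,w1))) (cm m22 (u2,w2)) = (ru2, rw2))
    by (unfold m20, m21, m22, cm, ca, ru2, rw2; simpl; f_equal; ring).
  destruct (adj_identity m00 m01 m02 m10 m11 m12 m20 m21 m22 (u0,w0) (u1,w1) (u2,w2)) as [I0 [I1 I2]].
  simpl in I0, I1, I2. rewrite Hr0, Hr1, Hr2 in I0, I1, I2.
  set (d := det3c m00 m01 m02 m10 m11 m12 m20 m21 m22) in *.
  assert (Hd : fst d = dA + al*(-(al*al) + 3*(be*be) - c)).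
  { assert (E22 : a22 = - a00 - a11) by lra.
    unfold d, det3c, dA, det3, c, c1, m00, m01, m02, m10, m11, m12, m20, m21, m22, cm, ca, cs; simpl.
    fold a00 a01 a02 a10 a11 a12 a20 a21 a22. rewrite E22. ring. }
  assert (Hm : forall p, (p = m00 \/ p = m01 \/ p = m02 \/ p = m10 \/ p = m11 \/ p = m12 \/ p = m20 \/ p = m21 \/ p = m22)
      -> cabs1 p <= B).
  { assert (Hd0 : forall y, y = a00 \/ y = a11 \/ y = a22 -> cabs1 (y - al, - be) <= B).
    { intros y Hy. unfold cabs1; simpl. rewrite Rabs_Ropp.
      assert (Rabs y <= K) by (destruct Hy as [ -> |[ ->  | ->]]; unfold K; apply KA_entry; lia).
      pose proof (Rabs_triang y (-al)). rewrite Rabs_Ropp in H0. unfold B. unfold Rminus. lra. }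
    assert (Hd1 : forall y, y = a01 \/ y = a02 \/ y = a10 \/ y = a12 \/ y = a20 \/ y = a21 -> cabs1 (y, 0) <= B).
    { intros y Hy. unfold cabs1; simpl. rewrite Rabs_R0.
      assert (Rabs y <= K) by (destruct Hy as [ -> |[ -> |[ -> |[ -> |[ ->  | ->]]]]]; unfold K; apply KA_entry; lia).
      unfold B. lra. }
    intros p Hp. destruct Hp as [ -> |[ -> |[ -> |[ -> |[ -> |[ -> |[ -> |[ ->  | ->]]]]]]]];
      unfold m00, m01, m02, m10, m11, m12, m20, m21, m22; first [apply Hd0; tauto | apply Hd1; tauto]. }
  assert (Hadj : forall p q p' q', (p = m00 \/ p = m01 \/ p = m02 \/ p = m10 \/ p = m11 \/ p = m12 \/ p = m20 \/ p = m21 \/ p = m22) ->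
       (q = m00 \/ q = m01 \/ q = m02 \/ q = m10 \/ q = m11 \/ q = m12 \/ q = m20 \/ q = m21 \/ q = m22) ->
       (p' = m00 \/ p' = m01 \/ p' = m02 \/ p' = m10 \/ p' = m11 \/ p' = m12 \/ p' = m20 \/ p' = m21 \/ p' = m22) ->
       (q' = m00 \/ q' = m01 \/ q' = m02 \/ q' = m10 \/ q' = m11 \/ q' = m12 \/ q' = m20 \/ q' = m21 \/ q' = m22) ->
       cabs1 (cs (cm p q) (cm p' q')) <= Cad).
  { intros p q p' q' H1 H2 H3 H4. unfold Cad. apply adj_entry_bound; auto. }
  set (Sr := cabs1 (ru0, rw0) + cabs1 (ru1, rw1) + cabs1 (ru2, rw2)).
  assert (HSr : Sr <= eps * N).
  { unfold Sr, cabs1, N; simpl. lra. }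
  assert (K0 : Rabs (fst d) * cabs1 (u0,w0) <= 2 * (Cad * Sr)).
  { eapply Rle_trans; [apply cabs1_low|]. rewrite I0. apply Rmult_le_compat_l; [lra|].
    apply combo_bound; apply Hadj; tauto. }
  assert (K1 : Rabs (fst d) * cabs1 (u1,w1) <= 2 * (Cad * Sr)).
  { eapply Rle_trans; [apply cabs1_low|]. rewrite I1. apply Rmult_le_compat_l; [lra|].
    apply combo_bound; apply Hadj; tauto. }
  assert (K2 : Rabs (fst d) * cabs1 (u2,w2) <= 2 * (Cad * Sr)).
  { eapply Rle_trans; [apply cabs1_low|]. rewrite I2. apply Rmult_le_compat_l; [lra|].
    apply combo_bound; apply Hadj; tauto. }
  assert (HNpos : 0 < N).
  { unfold N. destruct Hnz as [Hn|Hn].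
    - destruct (Req_dec u0 0) as [Z0|Z0]; [destruct (Req_dec u1 0) as [Z1|Z1]; [destruct (Req_dec u2 0) as [Z2|Z2]|]|].
      + exfalso; apply Hn; rewrite Z0, Z1, Z2; reflexivity.
      + pose proof (Rabs_pos_lt u2 Z2). pose proof (Rabs_pos u0); pose proof (Rabs_pos u1);
        pose proof (Rabs_pos w0); pose proof (Rabs_pos w1); pose proof (Rabs_pos w2); lra.
      + pose proof (Rabs_pos_lt u1 Z1). pose proof (Rabs_pos u0); pose proof (Rabs_pos u2);
        pose proof (Rabs_pos w0); pose proof (Rabs_pos w1); pose proof (Rabs_pos w2); lra.
      + pose proof (Rabs_pos_lt u0 Z0). pose proof (Rabs_pos u1); pose proof (Rabs_pos u2);
        pose proof (Rabs_pos w0); pose proof (Rabs_pos w1); pose proof (Rabs_pos w2); lra.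
    - destruct (Req_dec w0 0) as [Z0|Z0]; [destruct (Req_dec w1 0) as [Z1|Z1]; [destruct (Req_dec w2 0) as [Z2|Z2]|]|].
      + exfalso; apply Hn; rewrite Z0, Z1, Z2; reflexivity.
      + pose proof (Rabs_pos_lt w2 Z2). pose proof (Rabs_pos u0); pose proof (Rabs_pos u1);
        pose proof (Rabs_pos w0); pose proof (Rabs_pos w1); pose proof (Rabs_pos u2); lra.
      + pose proof (Rabs_pos_lt w1 Z1). pose proof (Rabs_pos u0); pose proof (Rabs_pos u2);
        pose proof (Rabs_pos w0); pose proof (Rabs_pos u1); pose proof (Rabs_pos w2); lra.
      + pose proof (Rabs_pos_lt w0 Z0). pose proof (Rabs_pos u1); pose proof (Rabs_pos u2);
        pose proof (Rabs_pos u0); pose proof (Rabs_pos w1); pose proof (Rabs_pos w2); lra. }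
  assert (Hsum : Rabs (fst d) * N <= 6 * Cad * eps * N).
  { assert (E : cabs1 (u0,w0) + cabs1 (u1,w1) + cabs1 (u2,w2) = N) by (unfold cabs1, N; simpl; ring).
    rewrite <- E. assert (Cad * Sr <= Cad * (eps*N)) by (apply Rmult_le_compat_l; lra). rewrite E. nra. }
  assert (Hfd : Rabs (fst d) <= 6 * Cad * eps) by (apply (Rmult_le_reg_r N); [lra|lra]).
  assert (Hlow : Rabs dA - Rabs al * (3*(R*R) + Rabs c) <= Rabs (fst d)).
  { rewrite Hd. pose proof (Rabs_triang (dA + al * (- (al * al) + 3 * (be * be) - c)) (- (al * (- (al * al) + 3 * (be * be) - c)))).
    rewrite Rabs_Ropp in H. replace (dA + al * (- (al * al) + 3 * (be * be) - c) + - (al * (- (al * al) + 3 * (be * be) - c))) with dA in H by ring.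
    rewrite Rabs_mult in H.
    assert (Rabs (- (al * al) + 3 * (be * be) - c) <= 3*(R*R) + Rabs c).
    { pose proof (Rabs_triang (- (al * al) + 3 * (be * be)) (-c)). rewrite Rabs_Ropp in H0.
      assert (Rabs (- (al * al) + 3 * (be * be)) <= 3*(R*R)).
      { apply Rabs_le. nra. }
      unfold Rminus. lra. }
    pose proof (Rabs_pos al). nra. }
  assert (Rabs al * (3*(R*R) + Rabs c) <= T*(R*R)/2 * (3*(R*R) + Rabs c))
    by (apply Rmult_le_compat_r; [pose proof (Rabs_pos c); nra|exact Halb]).
  assert (T*(R*R)/2 * (3*(R*R) + Rabs c) <= Rabs dA / 2).
  { pose proof (Rabs_pos c). nra. }
  lra.
Qed.

Lemma shift_deriv (F : R -> R) a l : derivable_pt_lim (fun h => F (a + h)) 0 l -> derivable_pt_lim F a l.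
Proof.
  intros H eps He. destruct (H eps He) as [del Hd]. exists del. intros h Hh Hh2.
  specialize (Hd h Hh Hh2). rewrite Rplus_0_l, Rplus_0_r in Hd. exact Hd.
Qed.

Lemma partial_line (g : R -> V3 -> R) k s z l : (k < 3)%nat -> partial g (S k) s z l ->
  derivable_pt_lim (fun t => g s (setk z k t)) (cmp z k) l.
Proof.
  intros Hk Hp. destruct z as [[a b] c]. unfold partial, shift in Hp.
  destruct k as [|[|[|k]]]; try lia; simpl in *; apply shift_deriv.
  - replace (fun h => g s (a + h, b, c)) with (fun h => g s (vadd (a, b, c) (h, 0, 0))); [exact Hp|].
    apply functional_extensionality; intro h. unfold vadd; simpl. rewrite !Rplus_0_r. reflexivity.
  - replace (fun h => g s (a, b + h, c)) with (fun h => g s (vadd (a, b, c) (0, h, 0))); [exact Hp|].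
    apply functional_extensionality; intro h. unfold vadd; simpl. rewrite !Rplus_0_r. reflexivity.
  - replace (fun h => g s (a, b, c + h)) with (fun h => g s (vadd (a, b, c) (0, 0, h))); [exact Hp|].
    apply functional_extensionality; intro h. unfold vadd; simpl. rewrite !Rplus_0_r. reflexivity.
Qed.

Definition Near (t0 : R) (x : V3) (P : R -> V3 -> Prop) : Prop :=
  exists rho, 0 < rho /\ forall s z, Rabs (s - t0) + n1 (vsub z x) < rho -> P s z.

Lemma Near_and t0 x P Q : Near t0 x P -> Near t0 x Q -> Near t0 x (fun s z => P s z /\ Q s z).
Proof.
  intros [r1 [H1 P1]] [r2 [H2 P2]]. exists (Rmin r1 r2). split; [apply Rmin_pos; lra|].
  intros s z Hd. split; [apply P1|apply P2]; eapply Rlt_le_trans; eauto; [apply Rmin_l|apply Rmin_r].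
Qed.

Lemma Near_fin t0 x (P : nat -> R -> V3 -> Prop) n :
  (forall i, (i < n)%nat -> Near t0 x (P i)) -> Near t0 x (fun s z => forall i, (i < n)%nat -> P i s z).
Proof.
  induction n as [|n IH]; intros H.
  - exists 1; split; [lra|]. intros s z _ i Hi; lia.
  - destruct (Near_and _ _ _ _ (IH (fun i Hi => H i ltac:(lia))) (H n ltac:(lia))) as [r [Hr Hp]].
    exists r; split; [exact Hr|]. intros s z Hd i Hi. destruct (Hp s z Hd) as [A B].
    destruct (Nat.eq_dec i n) as [->|Hne]; [exact B|apply A; lia].
Qed.

Lemma Near_mono t0 x (P Q : R -> V3 -> Prop) : (forall s z, P s z -> Q s z) -> Near t0 x P -> Near t0 x Q.
Proof. intros H [r [Hr Hp]]. exists r; split; auto. Qed.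

Lemma near_cont D t0 x (g : R -> V3 -> R) : open_domain D -> D t0 x -> cont_on D g ->
  forall eps, 0 < eps -> Near t0 x (fun s z => Rabs (g s z - g t0 x) < eps).
Proof.
  intros Ho Hx Hc eps He. destruct (Ho t0 x Hx) as [r [Hr Hr2]].
  destruct (Hc t0 x Hx eps He) as [del [Hdel Hd]].
  exists (Rmin r del). split; [apply Rmin_pos; lra|]. intros s z Hsz.
  apply Hd; [apply Hr2|]; eapply Rlt_le_trans; eauto; [apply Rmin_l|apply Rmin_r].
Qed.

Lemma near_D D t0 x : open_domain D -> D t0 x -> Near t0 x D.
Proof. intros Ho Hx. destruct (Ho t0 x Hx) as [r [Hr Hr2]]. exists r; split; auto. Qed.

Lemma fin_bound (P : nat -> R -> Prop) n :
  (forall i, (i < n)%nat -> exists M, forall M', M <= M' -> P i M') ->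
  exists M, forall M', M <= M' -> forall i, (i < n)%nat -> P i M'.
Proof.
  induction n as [|n IH]; intros H.
  - exists 0. intros; lia.
  - destruct (IH (fun i Hi => H i ltac:(lia))) as [M1 HM1].
    destruct (H n ltac:(lia)) as [M2 HM2].
    exists (Rmax M1 M2). intros M' HM' i Hi.
    destruct (Nat.eq_dec i n) as [->|Hne].
    + apply HM2. eapply Rle_trans; [apply Rmax_r|exact HM'].
    + apply HM1; [eapply Rle_trans; [apply Rmax_l|exact HM']|lia].
Qed.

Lemma choice2 (P : nat -> nat -> (R -> V3 -> R) -> Prop) :
  (forall i k, exists G, P i k G) -> exists G : nat -> nat -> R -> V3 -> R, forall i k, P i k (G i k).
Proof.
  intros H. exists (fun i k => proj1_sig (constructive_indefinite_description _ (H i k))).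
  intros i k. exact (proj2_sig (constructive_indefinite_description _ (H i k))).
Qed.

Lemma choice3 (P : nat -> nat -> nat -> (R -> V3 -> R) -> Prop) :
  (forall i k j, exists G, P i k j G) -> exists G : nat -> nat -> nat -> R -> V3 -> R, forall i k j, P i k j (G i k j).
Proof.
  intros H. exists (fun i k j => proj1_sig (constructive_indefinite_description _ (H i k j))).
  intros i k j. exact (proj2_sig (constructive_indefinite_description _ (H i k j))).
Qed.

Definition setup (f : R -> V3 -> V3) (t0 : R) (x : V3) (A : M3) (rho : R)
  (G : nat -> nat -> R -> V3 -> R) (H : nat -> nat -> nat -> R -> V3 -> R) (M2 Fb e1 : R) : Prop :=
  forall s z, Rabs (s - t0) < rho -> cube x rho z ->
   (forall i k, (i < 3)%nat -> (k < 3)%nat -> partial (fc f i) (S k) s z (G i k s z)) /\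
   (forall i k j, (i < 3)%nat -> (k < 3)%nat -> (j < 3)%nat -> partial (G i k) (S j) s z (H i k j s z)) /\
   (forall i k j, (i < 3)%nat -> (k < 3)%nat -> (j < 3)%nat -> Rabs (H i k j s z) <= M2) /\
   (forall i k, (i < 3)%nat -> (k < 3)%nat -> Rabs (G i k s z - A i k) <= e1) /\
   (forall i, (i < 3)%nat -> Rabs (fc f i s z) <= Fb).

Lemma cube_dist x rho s t0 z : Rabs (s - t0) < rho -> cube x rho z -> Rabs (s - t0) + n1 (vsub z x) < 4*rho.
Proof.
  intros Hs [H0 [H1 H2]]. unfold n1, vsub. destruct z as [[a b] c]; destruct x as [[p q] r]; simpl in *. lra.
Qed.

Lemma setup_exists D f t0 x A :
  open_domain D -> C3_field D f -> D t0 x -> spatial_jacobian f t0 x A ->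
  forall e1, 0 < e1 -> exists rho G H M2 Fb, 0 < rho /\ setup f t0 x A rho G H M2 Fb e1.
Proof.
  intros Ho Hf Hx HA e1 He1.
  destruct (choice2 (fun i k G => (i < 3)%nat -> (k < 3)%nat ->
     (forall t y, D t y -> partial (fc f i) (S k) t y (G t y)) /\ Ck 2 D G)) as [G HG].
  { intros i k. destruct (Compare_dec.lt_dec i 3) as [Hi|Hi]; [|exists (fun _ _ => 0); intros; lia].
    destruct (Compare_dec.lt_dec k 3) as [Hk|Hk]; [|exists (fun _ _ => 0); intros; lia].
    destruct (Hf i Hi) as [_ Hd]. destruct (Hd (S k) ltac:(lia)) as [dg [Hdg Hck]].
    exists dg. intros; split; assumption. }
  destruct (choice3 (fun i k j Hf => (i < 3)%nat -> (k < 3)%nat -> (j < 3)%nat ->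
     (forall t y, D t y -> partial (G i k) (S j) t y (Hf t y)) /\ cont_on D Hf)) as [Hh HH].
  { intros i k j. destruct (Compare_dec.lt_dec i 3) as [Hi|Hi]; [|exists (fun _ _ => 0); intros; lia].
    destruct (Compare_dec.lt_dec k 3) as [Hk|Hk]; [|exists (fun _ _ => 0); intros; lia].
    destruct (Compare_dec.lt_dec j 3) as [Hj|Hj]; [|exists (fun _ _ => 0); intros; lia].
    destruct (HG i k Hi Hk) as [_ [_ Hd]]. destruct (Hd (S j) ltac:(lia)) as [dg [Hdg [Hck _]]].
    exists dg. intros; split; assumption. }
  assert (HGA : forall i k, (i < 3)%nat -> (k < 3)%nat -> G i k t0 x = A i k).
  { intros i k Hi Hk. destruct (HG i k Hi Hk) as [Hp _].
    apply (uniqueness_limite _ _ _ _ (Hp t0 x Hx) (HA i k Hi Hk)). }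
  destruct (fin_bound (fun i M => forall k j, (k < 3)%nat -> (j < 3)%nat -> Rabs (Hh i k j t0 x) + 1 <= M) 3)
    as [M2 HM2].
  { intros i Hi.
    destruct (fin_bound (fun k M => forall j, (j < 3)%nat -> Rabs (Hh i k j t0 x) + 1 <= M) 3) as [M HM].
    { intros k Hk.
      destruct (fin_bound (fun j M => Rabs (Hh i k j t0 x) + 1 <= M) 3) as [M' HM'].
      { intros j Hj. exists (Rabs (Hh i k j t0 x) + 1). intros; lra. }
      exists M'. intros M'' H'' j Hj. apply (HM' M'' H'' j Hj). }
    exists M. intros M'' H'' k j Hk Hj. apply (HM M'' H'' k Hk j Hj). }
  destruct (fin_bound (fun i M => Rabs (fc f i t0 x) + 1 <= M) 3) as [Fb HFb].
  { intros i Hi. exists (Rabs (fc f i t0 x) + 1). intros; lra. }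
  assert (N1 : Near t0 x D) by (apply near_D; auto).
  assert (N2 : Near t0 x (fun s z => forall i, (i<3)%nat -> forall k, (k<3)%nat -> forall j, (j<3)%nat ->
                 Rabs (Hh i k j s z - Hh i k j t0 x) < 1)).
  { apply Near_fin; intros i Hi. apply Near_fin; intros k Hk. apply Near_fin; intros j Hj.
    destruct (HH i k j Hi Hk Hj) as [_ Hc]. apply (near_cont D); auto; lra. }
  assert (N3 : Near t0 x (fun s z => forall i, (i<3)%nat -> forall k, (k<3)%nat ->
                 Rabs (G i k s z - G i k t0 x) < e1)).
  { apply Near_fin; intros i Hi. apply Near_fin; intros k Hk.
    destruct (HG i k Hi Hk) as [_ [Hc _]]. apply (near_cont D); auto. }
  assert (N4 : Near t0 x (fun s z => forall i, (i<3)%nat -> Rabs (fc f i s z - fc f i t0 x) < 1)).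
  { apply Near_fin; intros i Hi. destruct (Hf i Hi) as [Hc _]. apply (near_cont D); auto; lra. }
  destruct (Near_and _ _ _ _ N1 (Near_and _ _ _ _ N2 (Near_and _ _ _ _ N3 N4))) as [r [Hr Hn]].
  exists (r/4), G, Hh, M2, Fb. split; [lra|].
  intros s z Hs Hz.
  assert (Hd : Rabs (s - t0) + n1 (vsub z x) < r) by (pose proof (cube_dist x (r/4) s t0 z Hs Hz); lra).
  destruct (Hn s z Hd) as [HD [H2 [H3 H4]]].
  split; [|split; [|split; [|split]]].
  - intros i k Hi Hk. destruct (HG i k Hi Hk) as [Hp _]. apply Hp; exact HD.
  - intros i k j Hi Hk Hj. destruct (HH i k j Hi Hk Hj) as [Hp _]. apply Hp; exact HD.
  - intros i k j Hi Hk Hj. specialize (H2 i Hi k Hk j Hj).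
    assert (Rabs (Hh i k j t0 x) + 1 <= M2) by (apply (HM2 M2 (Rle_refl _) i Hi k j Hk Hj)).
    pose proof (Rabs_triang_inv (Hh i k j s z) (Hh i k j t0 x)). lra.
  - intros i k Hi Hk. rewrite <- HGA by assumption. left. apply H3; assumption.
  - intros i Hi. specialize (H4 i Hi).
    assert (Rabs (fc f i t0 x) + 1 <= Fb) by (apply (HFb Fb (Rle_refl _) i Hi)).
    pose proof (Rabs_triang_inv (fc f i s z) (fc f i t0 x)). lra.
Qed.

Definition vd (W : R -> V3) (t : R) (d : V3) : Prop :=
  forall k, (k < 3)%nat -> derivable_pt_lim (fun s => cmp (W s) k) t (cmp d k).

Lemma vd_sub W1 W2 t d1 d2 : vd W1 t d1 -> vd W2 t d2 -> vd (fun s => vsub (W1 s) (W2 s)) t (vsub d1 d2).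
Proof.
  intros H1 H2 k Hk. destruct k as [|[|[|k]]]; try lia; simpl;
  apply (derivable_pt_lim_minus (fun s => cmp (W1 s) _) (fun s => cmp (W2 s) _)); auto.
Qed.

Lemma vd_add W1 W2 t d1 d2 : vd W1 t d1 -> vd W2 t d2 -> vd (fun s => vadd (W1 s) (W2 s)) t (vadd d1 d2).
Proof.
  intros H1 H2 k Hk. destruct k as [|[|[|k]]]; try lia; simpl;
  apply (derivable_pt_lim_plus (fun s => cmp (W1 s) _) (fun s => cmp (W2 s) _)); auto.
Qed.

Lemma vd_scal c W t d : vd W t d -> vd (fun s => vscal c (W s)) t (vscal c d).
Proof.
  intros H k Hk. destruct k as [|[|[|k]]]; try lia; simpl;
  apply (derivable_pt_lim_scal (fun s => cmp (W s) _)); auto.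
Qed.

Lemma vd_const v t : vd (fun _ => v) t v0.
Proof. intros k Hk. destruct k as [|[|[|k]]]; try lia; simpl; apply derivable_pt_lim_const. Qed.

Lemma dlin2 p q t0 t : derivable_pt_lim (fun s => (s - t0) * p + q) t p.
Proof.
  assert (H := derivable_pt_lim_plus (fun s => (s - t0) * p) (fct_cte q) t p 0).
  unfold plus_fct, fct_cte in H. rewrite Rplus_0_r in H. apply H; [|apply derivable_pt_lim_const].
  assert (H2 := derivable_pt_lim_minus (fun s => s * p) (fct_cte (t0*p)) t p 0 (dlin p t) (derivable_pt_lim_const _ _)).
  unfold minus_fct, fct_cte in H2. rewrite Rminus_0_r in H2.
  replace (fun s => (s - t0) * p) with (fun s => s * p - t0 * p); [exact H2|].
  apply functional_extensionality; intro; ring.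
Qed.

Lemma dlin3 p t0 t : derivable_pt_lim (fun s => (s - t0) * p) t p.
Proof.
  replace (fun s => (s - t0) * p) with (fun s => (s - t0) * p + 0)
    by (apply functional_extensionality; intro; ring). apply dlin2.
Qed.

Lemma vd_lin t0 v t : vd (fun s => vscal (s - t0) v) t v.
Proof.
  intros k Hk. destruct k as [|[|[|k]]]; try lia; simpl; apply dlin3.
Qed.

Lemma vd_cont W t d : vd W t d -> continuity_pt (fun s => n1 (W s)) t.
Proof.
  intros H. apply n1_cont. intros k Hk. apply (derivable_continuous_pt _ _ (exist _ _ (H k Hk))).
Qed.

Lemma n1_add u v : n1 (vadd u v) <= n1 u + n1 v.
Proof.
  destruct u as [[a b] c], v as [[d e] g]. unfold n1, vadd; simpl.
  pose proof (Rabs_triang a d); pose proof (Rabs_triang b e); pose proof (Rabs_triang c g). lra.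
Qed.

Lemma n1_sub u v : n1 (vsub u v) <= n1 u + n1 v.
Proof.
  destruct u as [[a b] c], v as [[d e] g]. unfold n1, vsub; simpl.
  pose proof (Rabs_triang a (-d)); pose proof (Rabs_triang b (-e)); pose proof (Rabs_triang c (-g)).
  rewrite !Rabs_Ropp in *. unfold Rminus. lra.
Qed.

Lemma n1_cube x rho z : n1 (vsub z x) < rho -> cube x rho z.
Proof.
  destruct z as [[a b] c], x as [[d e] g]. unfold n1, vsub, cube; simpl. intros H.
  pose proof (Rabs_pos (a-d)); pose proof (Rabs_pos (b-e)); pose proof (Rabs_pos (c-g)). lra.
Qed.

Lemma n1_comp v k : (k < 3)%nat -> Rabs (cmp v k) <= n1 v.
Proof.
  intros Hk. unfold n1.
  pose proof (Rabs_pos (cmp v 0)); pose proof (Rabs_pos (cmp v 1)); pose proof (Rabs_pos (cmp v 2)).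
  destruct k as [|[|[|k]]]; try lia; lra.
Qed.

Lemma n1_vadd_sub x h : vsub (vadd x h) x = h.
Proof. destruct x as [[a b] c], h as [[d e] g]. unfold vsub, vadd; simpl. v3eq; ring. Qed.

Lemma mapply_lin M c u v : mapply M (vadd (vscal c u) v) = vadd (vscal c (mapply M u)) (mapply M v).
Proof. destruct u as [[a b] d], v as [[e g] i]. unfold mapply, mrow, vadd, vscal; simpl. v3eq; ring. Qed.

Lemma mapply_v0 M : mapply M v0 = v0.
Proof. unfold mapply, mrow, v0; simpl. v3eq; ring. Qed.

Lemma n1_v0 : n1 v0 = 0.
Proof. unfold n1, v0; simpl. rewrite Rabs_R0. ring. Qed.

Lemma mapply_sub M u v : mapply M (vsub u v) = vsub (mapply M u) (mapply M v).
Proof. destruct u as [[a b] d], v as [[e g] i]. unfold mapply, mrow, vsub; simpl. v3eq; ring. Qed.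

Lemma mapply_scal M c u : mapply M (vscal c u) = vscal c (mapply M u).
Proof. destruct u as [[a b] d]. unfold mapply, mrow, vscal; simpl. v3eq; ring. Qed.

Lemma vsub_tri a b c : n1 (vsub a c) <= n1 (vsub a b) + n1 (vsub b c).
Proof.
  replace (vsub a c) with (vadd (vsub a b) (vsub b c)); [apply n1_add|].
  destruct a as [[a1 a2] a3], b as [[b1 b2] b3], c as [[c1 c2] c3]. unfold vadd, vsub; simpl. v3eq; ring.
Qed.

Lemma n1_vsub0 v : n1 (vsub v v0) = n1 v.
Proof. destruct v as [[a b] c]. unfold n1, vsub, v0; simpl. rewrite !Rminus_0_r. reflexivity. Qed.

Section Flow.
Variables (f : R -> V3 -> V3) (phi : R -> R -> V3 -> V3) (t0 : R) (x : V3) (A : M3) (rho : R)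
  (G : nat -> nat -> R -> V3 -> R) (H : nat -> nat -> nat -> R -> V3 -> R) (M2 Fb e1 del r : R).
Hypothesis Hset : setup f t0 x A rho G H M2 Fb e1.
Hypothesis Hrho : 0 < rho.
Hypothesis Hdel : 0 < del.
Hypothesis Hr : 0 < r.
Hypothesis He1 : 0 < e1.
Hypothesis Hflow : forall y, n1 (vsub y x) < r -> phi t0 t0 y = y /\
  forall tau, t0 - del < tau < t0 + del -> forall i, (i < 3)%nat ->
    derivable_pt_lim (fun s => cmp (phi s t0 y) i) tau (cmp (f tau (phi tau t0 y)) i).

Definition M1 := KA A + e1.
Definition LL := 9 * M1.
Definition Y := Rmin r (rho/2).
Definition Gm (s : R) (z : V3) : M3 := fun i k => G i k s z.

Lemma cube_x : cube x rho x.
Proof. unfold cube. rewrite !Rminus_diag, Rabs_R0. lra. Qed.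

Lemma M2_ge0 : 0 <= M2.
Proof.
  destruct (Hset t0 x ltac:(rewrite Rminus_diag, Rabs_R0; lra) cube_x) as [_ [_ [P _]]].
  specialize (P 0%nat 0%nat 0%nat ltac:(lia) ltac:(lia) ltac:(lia)). pose proof (Rabs_pos (H 0%nat 0%nat 0%nat t0 x)). lra.
Qed.

Lemma Fb_ge0 : 0 <= Fb.
Proof.
  destruct (Hset t0 x ltac:(rewrite Rminus_diag, Rabs_R0; lra) cube_x) as [_ [_ [_ [_ P]]]].
  specialize (P 0%nat ltac:(lia)). pose proof (Rabs_pos (fc f 0 t0 x)). lra.
Qed.

Lemma M1_ge0 : 0 <= M1.
Proof. unfold M1. pose proof (KA_ge0 A). lra. Qed.

Lemma LL_ge0 : 0 <= LL.
Proof. unfold LL. pose proof M1_ge0. lra. Qed.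

Lemma G_bound s z i k : Rabs (s - t0) < rho -> cube x rho z -> (i < 3)%nat -> (k < 3)%nat ->
  Rabs (G i k s z) <= M1.
Proof.
  intros Hs Hz Hi Hk. destruct (Hset s z Hs Hz) as [_ [_ [_ [P _]]]].
  specialize (P i k Hi Hk). pose proof (KA_entry A i k Hi Hk).
  pose proof (Rabs_triang (G i k s z - A i k) (A i k)).
  replace (G i k s z - A i k + A i k) with (G i k s z) in H1 by ring. unfold M1. lra.
Qed.

Lemma ld_f s i : Rabs (s - t0) < rho -> (i < 3)%nat -> line_deriv x rho (fc f i s) (fun k => G i k s).
Proof.
  intros Hs Hi z k Hz Hk. apply partial_line; [exact Hk|].
  destruct (Hset s z Hs Hz) as [P _]. apply P; assumption.
Qed.

Lemma ld_G s i k : Rabs (s - t0) < rho -> (i < 3)%nat -> (k < 3)%nat ->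
  line_deriv x rho (G i k s) (fun j => H i k j s).
Proof.
  intros Hs Hi Hk z j Hz Hj. apply partial_line; [exact Hj|].
  destruct (Hset s z Hs Hz) as [_ [P _]]. apply P; assumption.
Qed.

Lemma fbound s z : Rabs (s - t0) < rho -> cube x rho z -> n1 (f s z) <= 3 * Fb.
Proof.
  intros Hs Hz. destruct (Hset s z Hs Hz) as [_ [_ [_ [_ P]]]].
  unfold n1. pose proof (P 0%nat ltac:(lia)); pose proof (P 1%nat ltac:(lia)); pose proof (P 2%nat ltac:(lia)).
  unfold fc in *. lra.
Qed.

Lemma lipf s z z' : Rabs (s - t0) < rho -> cube x rho z -> cube x rho z' ->
  n1 (vsub (f s z) (f s z')) <= LL * n1 (vsub z z').
Proof.
  intros Hs Hz Hz'.
  assert (Hi : forall i, (i < 3)%nat -> Rabs (fc f i s z - fc f i s z') <= M1 * n1 (vsub z z')).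
  { intros i Hi. apply (fo_bound x rho (fc f i s) (fun k => G i k s) M1); auto.
    - apply ld_f; auto.
    - intros w k Hw Hk. apply G_bound; auto. }
  pose proof (Hi 0%nat ltac:(lia)); pose proof (Hi 1%nat ltac:(lia)); pose proof (Hi 2%nat ltac:(lia)).
  unfold fc in *. unfold n1 at 1, vsub at 1. simpl. pose proof (n1_ge0 (vsub z z')). pose proof M1_ge0.
  unfold LL. nra.
Qed.

Lemma taylorf s z z' : Rabs (s - t0) < rho -> cube x rho z -> cube x rho z' ->
  n1 (vsub (vsub (f s z) (f s z')) (mapply (Gm s z') (vsub z z'))) <= 3 * M2 * (n1 (vsub z z') * n1 (vsub z z')).
Proof.
  intros Hs Hz Hz'.
  assert (Hi : forall i, (i < 3)%nat -> Rabs (fc f i s z - fc f i s z' -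
     (G i 0%nat s z' * (cmp z 0 - cmp z' 0) + G i 1%nat s z' * (cmp z 1 - cmp z' 1)
      + G i 2%nat s z' * (cmp z 2 - cmp z' 2))) <= M2 * n1 (vsub z z') * n1 (vsub z z')).
  { intros i Hi. apply (so_bound x rho (fc f i s) (fun k => G i k s) (fun k j => H i k j s) M2); auto.
    - apply ld_f; auto.
    - intros k Hk. apply ld_G; auto.
    - intros w k j Hw Hk Hj. destruct (Hset s w Hs Hw) as [_ [_ [P _]]]. apply P; auto. }
  pose proof (Hi 0%nat ltac:(lia)); pose proof (Hi 1%nat ltac:(lia)); pose proof (Hi 2%nat ltac:(lia)).
  unfold fc, Gm in *. unfold n1 at 1, vsub at 1 2, mapply, mrow. simpl. lra.
Qed.

Lemma dlinA (F : R -> R) a b c p q w t l :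
  derivable_pt_lim F t l -> derivable_pt_lim (fun s => F s - (a * s * p + b * q + c * w)) t (l - a * p).
Proof.
  intros Hd.
  replace (fun s => F s - (a * s * p + b * q + c * w)) with (fun s => F s - ((s - 0) * (a*p) + (b*q + c*w)))
    by (apply functional_extensionality; intro; ring).
  apply (derivable_pt_lim_minus F (fun s => (s - 0) * (a*p) + (b*q + c*w))); [exact Hd|apply dlin2].
Qed.

Lemma linf s z z' : Rabs (s - t0) < rho -> cube x rho z -> cube x rho z' ->
  n1 (vsub (vsub (f s z) (f s z')) (mapply A (vsub z z'))) <= 3 * e1 * n1 (vsub z z').
Proof.
  intros Hs Hz Hz'.
  assert (Hi : forall i, (i < 3)%nat -> Rabs ((fc f i s z - (A i 0%nat * cmp z 0 + A i 1%nat * cmp z 1 + A i 2%nat * cmp z 2))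
       - (fc f i s z' - (A i 0%nat * cmp z' 0 + A i 1%nat * cmp z' 1 + A i 2%nat * cmp z' 2))) <= e1 * n1 (vsub z z')).
  { intros i Hi.
    apply (fo_bound x rho (fun w => fc f i s w - (A i 0%nat * cmp w 0 + A i 1%nat * cmp w 1 + A i 2%nat * cmp w 2))
             (fun k w => G i k s w - A i k) e1); auto.
    - intros w k Hw Hk. pose proof (ld_f s i Hs Hi w k Hw Hk) as Hd.
      destruct w as [[a b] c]. destruct k as [|[|[|k]]]; try lia; simpl in *.
      + replace (fun t => fc f i s (t, b, c) - (A i 0%nat * t + A i 1%nat * b + A i 2%nat * c)) with
          (fun t => fc f i s (t, b, c) - (1 * t * A i 0%nat + A i 1%nat * b + A i 2%nat * c))
          by (apply functional_extensionality; intro; f_equal; ring).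
        replace (G i 0%nat s (a, b, c) - A i 0%nat) with (G i 0%nat s (a, b, c) - 1 * A i 0%nat) by ring.
        apply dlinA. exact Hd.
      + replace (fun t => fc f i s (a, t, c) - (A i 0%nat * a + A i 1%nat * t + A i 2%nat * c)) with
          (fun t => fc f i s (a, t, c) - (1 * t * A i 1%nat + A i 0%nat * a + A i 2%nat * c))
          by (apply functional_extensionality; intro; f_equal; ring).
        replace (G i 1%nat s (a, b, c) - A i 1%nat) with (G i 1%nat s (a, b, c) - 1 * A i 1%nat) by ring.
        apply dlinA. exact Hd.
      + replace (fun t => fc f i s (a, b, t) - (A i 0%nat * a + A i 1%nat * b + A i 2%nat * t)) with
          (fun t => fc f i s (a, b, t) - (1 * t * A i 2%nat + A i 0%nat * a + A i 1%nat * b))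
          by (apply functional_extensionality; intro; f_equal; ring).
        replace (G i 2%nat s (a, b, c) - A i 2%nat) with (G i 2%nat s (a, b, c) - 1 * A i 2%nat) by ring.
        apply dlinA. exact Hd.
    - intros w k Hw Hk. destruct (Hset s w Hs Hw) as [_ [_ [_ [P _]]]]. apply P; auto. }
  pose proof (Hi 0%nat ltac:(lia)); pose proof (Hi 1%nat ltac:(lia)); pose proof (Hi 2%nat ltac:(lia)).
  unfold fc in *. unfold n1 at 1, vsub at 1 2, mapply, mrow. simpl.
  destruct z as [[a b] c], z' as [[a' b'] c']. simpl in *.
  replace (cmp (f s (a, b, c)) 0 - cmp (f s (a', b', c')) 0 -
     (A 0%nat 0%nat * (a - a') + A 0%nat 1%nat * (b - b') + A 0%nat 2%nat * (c - c'))) with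
    (cmp (f s (a, b, c)) 0 - (A 0%nat 0%nat * a + A 0%nat 1%nat * b + A 0%nat 2%nat * c) -
       (cmp (f s (a', b', c')) 0 - (A 0%nat 0%nat * a' + A 0%nat 1%nat * b' + A 0%nat 2%nat * c'))) by ring.
  replace (cmp (f s (a, b, c)) 1 - cmp (f s (a', b', c')) 1 -
     (A 1%nat 0%nat * (a - a') + A 1%nat 1%nat * (b - b') + A 1%nat 2%nat * (c - c'))) with
    (cmp (f s (a, b, c)) 1 - (A 1%nat 0%nat * a + A 1%nat 1%nat * b + A 1%nat 2%nat * c) -
       (cmp (f s (a', b', c')) 1 - (A 1%nat 0%nat * a' + A 1%nat 1%nat * b' + A 1%nat 2%nat * c'))) by ring.
  replace (cmp (f s (a, b, c)) 2 - cmp (f s (a', b', c')) 2 -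
     (A 2%nat 0%nat * (a - a') + A 2%nat 1%nat * (b - b') + A 2%nat 2%nat * (c - c'))) with
    (cmp (f s (a, b, c)) 2 - (A 2%nat 0%nat * a + A 2%nat 1%nat * b + A 2%nat 2%nat * c) -
       (cmp (f s (a', b', c')) 2 - (A 2%nat 0%nat * a' + A 2%nat 1%nat * b' + A 2%nat 2%nat * c'))) by ring.
  lra.
Qed.

Definition Tgood (T : R) : Prop := 0 < T /\ T < del /\ T < rho /\ 6 * Fb * T < rho / 2 /\ LL * T <= 1/4.

Lemma Y_r : Y <= r.
Proof. apply Rmin_l. Qed.
Lemma Y_rho : Y <= rho/2.
Proof. apply Rmin_r. Qed.

Lemma vd_phi y tau : n1 (vsub y x) < r -> t0 - del < tau < t0 + del ->
  vd (fun s => phi s t0 y) tau (f tau (phi tau t0 y)).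
Proof. intros Hy Ht k Hk. destruct (Hflow y Hy) as [_ P]. apply P; auto. Qed.

Lemma confine T : Tgood T -> forall y, n1 (vsub y x) < Y -> forall tau, t0 <= tau <= t0 + T ->
  n1 (vsub (phi tau t0 y) x) < rho.
Proof.
  intros [HT0 [HTd [HTr [HTF HTL]]]] y Hy tau Htau.
  pose proof Y_r. pose proof Y_rho. pose proof Fb_ge0.
  assert (Hyr : n1 (vsub y x) < r) by lra.
  set (u := fun s => n1 (vsub (phi s t0 y) y)).
  assert (Hvd : forall s, t0 - del < s < t0 + del ->
     vd (fun s => vsub (phi s t0 y) y) s (vsub (f s (phi s t0 y)) v0)).
  { intros s Hs. apply vd_sub; [apply vd_phi; auto|apply vd_const]. }
  assert (Hg := gronwall u t0 (t0 + T) 0 (3*Fb) 0 (rho/2) ltac:(lra) ltac:(lra) ltac:(lra) ltac:(lra) ltac:(lra)).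
  assert (Hu : u tau <= 0 + 2*(0*0 + 3*Fb)*(tau - t0)).
  { apply Hg; [| | | |exact Htau].
    - intros s Hs. apply (vd_cont _ _ _ (Hvd s ltac:(lra))).
    - unfold u. destruct (Hflow y Hyr) as [E _]. rewrite E.
      replace (vsub y y) with v0 by (destruct y as [[a b] c]; unfold vsub, v0; simpl; v3eq; ring).
      rewrite n1_v0. lra.
    - lra.
    - intros s Hs Hus e He.
      destruct (dini_n1 _ _ s (Hvd s ltac:(lra)) e He) as [h0 [Hh0 Hh]].
      exists h0; split; [exact Hh0|]. intros h Hh1. specialize (Hh h Hh1).
      rewrite n1_vsub0 in Hh.
      assert (n1 (f s (phi s t0 y)) <= 3 * Fb).
      { apply fbound; [apply Rabs_def1; lra|]. apply n1_cube.
        pose proof (vsub_tri (phi s t0 y) y x) as Htri. change (n1 (vsub (phi s t0 y) y)) with (u s) in Htri. lra. }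
      unfold u in *. nra. }
  pose proof (vsub_tri (phi tau t0 y) y x) as Htri. change (n1 (vsub (phi tau t0 y) y)) with (u tau) in Htri.
  assert (Fb * (tau - t0) <= Fb * T) by (apply Rmult_le_compat_l; lra). lra.
Qed.

Lemma confine_cube T : Tgood T -> forall y, n1 (vsub y x) < Y -> forall tau, t0 <= tau <= t0 + T ->
  Rabs (tau - t0) < rho /\ cube x rho (phi tau t0 y).
Proof.
  intros HT y Hy tau Htau. pose proof HT as [HT0 [_ [HTr _]]]. split.
  - apply Rabs_def1; lra.
  - apply n1_cube. eapply confine; eauto.
Qed.

Definition delta (h : V3) (tau : R) : V3 := vsub (phi tau t0 (vadd x h)) (phi tau t0 x).
Definition fd (h : V3) (tau : R) : V3 := vsub (f tau (phi tau t0 (vadd x h))) (f tau (phi tau t0 x)).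

Lemma x_small : n1 (vsub x x) < Y.
Proof.
  replace (vsub x x) with v0 by (destruct x as [[a b] c]; unfold vsub, v0; simpl; v3eq; ring).
  rewrite n1_v0. unfold Y. apply Rmin_pos; lra.
Qed.

Lemma xh_small h : n1 h < Y -> n1 (vsub (vadd x h) x) < Y.
Proof. intros Hh. rewrite n1_vadd_sub. exact Hh. Qed.

Lemma vd_delta h tau : n1 h < Y -> t0 - del < tau < t0 + del -> vd (delta h) tau (fd h tau).
Proof.
  intros Hh Ht. pose proof Y_r. unfold delta, fd. apply vd_sub; apply vd_phi; auto.
  - rewrite n1_vadd_sub; lra.
  - pose proof x_small; lra.
Qed.

Lemma delta_t0 h : n1 h < Y -> delta h t0 = h.
Proof.
  intros Hh. pose proof Y_r. unfold delta.
  destruct (Hflow (vadd x h) ltac:(rewrite n1_vadd_sub; lra)) as [E1 _].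
  destruct (Hflow x ltac:(pose proof x_small; lra)) as [E2 _].
  rewrite E1, E2. rewrite <- (n1_vadd_sub x h) at 2. reflexivity.
Qed.

Lemma fd_lip T h tau : Tgood T -> n1 h < Y -> t0 <= tau <= t0 + T -> n1 (fd h tau) <= LL * n1 (delta h tau).
Proof.
  intros HT Hh Ht.
  destruct (confine_cube T HT (vadd x h) (xh_small h Hh) tau Ht) as [Hs Hc1].
  destruct (confine_cube T HT x x_small tau Ht) as [_ Hc2].
  apply lipf; auto.
Qed.

Lemma lip_delta T : Tgood T -> forall h, n1 h < Y -> forall tau, t0 <= tau <= t0 + T ->
  n1 (delta h tau) <= 3/2 * n1 h.
Proof.
  intros HT h Hh tau Htau. pose proof HT as [HT0 [HTd [HTr [HTF HTL]]]].
  pose proof LL_ge0. pose proof (n1_ge0 h).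
  assert (Hg := gronwall (fun s => n1 (delta h s)) t0 (t0 + T) LL 0 (n1 h) (2 * n1 h + 1)
     ltac:(lra) ltac:(lra) ltac:(lra) ltac:(lra) ltac:(lra)).
  assert (n1 (delta h tau) <= n1 h + 2*(LL * n1 h + 0)*(tau - t0)).
  { apply Hg; [| | | |exact Htau].
    - intros s Hs. apply (vd_cont _ _ _ (vd_delta h s Hh ltac:(lra))).
    - rewrite delta_t0 by exact Hh. lra.
    - nra.
    - intros s Hs _ e He.
      destruct (dini_n1 _ _ s (vd_delta h s Hh ltac:(lra)) e He) as [h0 [Hh0 Hd]].
      exists h0; split; [exact Hh0|]. intros h1 Hh1. specialize (Hd h1 Hh1).
      pose proof (fd_lip T h s HT Hh ltac:(lra)). nra. }
  assert (LL * (tau - t0) <= 1/4) by (assert (LL*(tau-t0) <= LL*T) by (apply Rmult_le_compat_l; lra); lra).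
  assert (n1 h * (LL * (tau - t0)) <= n1 h * (1/4)) by (apply Rmult_le_compat_l; lra).
  nra.
Qed.

Definition Wsum (Lc : list (R * V3)) (tau : R) : V3 :=
  fold_right (fun p acc => vadd (vscal (fst p) (delta (snd p) tau)) acc) v0 Lc.
Definition Dsum (Lc : list (R * V3)) (tau : R) : V3 :=
  fold_right (fun p acc => vadd (vscal (fst p) (fd (snd p) tau)) acc) v0 Lc.
Definition Wsum0 (Lc : list (R * V3)) : V3 :=
  fold_right (fun p acc => vadd (vscal (fst p) (snd p)) acc) v0 Lc.
Definition etaL (Lc : list (R * V3)) : R :=
  fold_right (fun p acc => Rabs (fst p) * (7 * M2) * (n1 (snd p) * n1 (snd p)) + acc) 0 Lc.
Definition allsmall (Lc : list (R * V3)) : Prop := forall p, In p Lc -> n1 (snd p) < Y.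

Lemma etaL_ge0 Lc : 0 <= etaL Lc.
Proof.
  induction Lc as [|p Lc IH]; simpl; [lra|]. pose proof M2_ge0. pose proof (Rabs_pos (fst p)).
  pose proof (n1_ge0 (snd p)).
  assert (0 <= Rabs (fst p) * (7 * M2) * (n1 (snd p) * n1 (snd p))) by (repeat apply Rmult_le_pos; lra).
  lra.
Qed.

Lemma vd_Wsum Lc tau : allsmall Lc -> t0 - del < tau < t0 + del -> vd (Wsum Lc) tau (Dsum Lc tau).
Proof.
  intros Ha Ht. induction Lc as [|p Lc IH].
  - apply vd_const.
  - simpl. apply (vd_add (fun s => vscal (fst p) (delta (snd p) s)) (Wsum Lc)).
    + apply vd_scal. apply vd_delta; [apply Ha; left; reflexivity|exact Ht].
    + apply IH. intros q Hq. apply Ha; right; exact Hq.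
Qed.

Lemma Wsum_t0 Lc : allsmall Lc -> Wsum Lc t0 = Wsum0 Lc.
Proof.
  intros Ha. induction Lc as [|p Lc IH]; [reflexivity|]. simpl.
  rewrite delta_t0 by (apply Ha; left; reflexivity). rewrite IH; [reflexivity|].
  intros q Hq. apply Ha; right; exact Hq.
Qed.

Lemma fd_taylor T h tau : Tgood T -> n1 h < Y -> t0 <= tau <= t0 + T ->
  n1 (vsub (fd h tau) (mapply (Gm tau (phi tau t0 x)) (delta h tau))) <= 7 * M2 * (n1 h * n1 h).
Proof.
  intros HT Hh Ht.
  destruct (confine_cube T HT (vadd x h) (xh_small h Hh) tau Ht) as [Hs Hc1].
  destruct (confine_cube T HT x x_small tau Ht) as [_ Hc2].
  unfold fd, delta. eapply Rle_trans; [apply taylorf; auto|].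
  fold (delta h tau). pose proof (lip_delta T HT h Hh tau Ht). pose proof (n1_ge0 (delta h tau)).
  pose proof (n1_ge0 h). pose proof M2_ge0.
  assert (n1 (delta h tau) * n1 (delta h tau) <= (3/2 * n1 h) * (3/2 * n1 h)) by (apply Rmult_le_compat; lra).
  nra.
Qed.

Lemma KA_Gm s z : Rabs (s - t0) < rho -> cube x rho z -> KA (Gm s z) <= LL.
Proof.
  intros Hs Hz. unfold KA, Gm, LL.
  pose proof (G_bound s z 0 0 Hs Hz ltac:(lia) ltac:(lia)); pose proof (G_bound s z 0 1 Hs Hz ltac:(lia) ltac:(lia));
  pose proof (G_bound s z 0 2 Hs Hz ltac:(lia) ltac:(lia)); pose proof (G_bound s z 1 0 Hs Hz ltac:(lia) ltac:(lia));
  pose proof (G_bound s z 1 1 Hs Hz ltac:(lia) ltac:(lia)); pose proof (G_bound s z 1 2 Hs Hz ltac:(lia) ltac:(lia));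
  pose proof (G_bound s z 2 0 Hs Hz ltac:(lia) ltac:(lia)); pose proof (G_bound s z 2 1 Hs Hz ltac:(lia) ltac:(lia));
  pose proof (G_bound s z 2 2 Hs Hz ltac:(lia) ltac:(lia)). lra.
Qed.

Lemma Dsum_bound T Lc tau : Tgood T -> allsmall Lc -> t0 <= tau <= t0 + T ->
  n1 (vsub (Dsum Lc tau) (mapply (Gm tau (phi tau t0 x)) (Wsum Lc tau))) <= etaL Lc.
Proof.
  intros HT Ha Ht. induction Lc as [|p Lc IH].
  - simpl. rewrite mapply_v0. replace (vsub v0 v0) with v0 by (unfold vsub, v0; simpl; v3eq; ring).
    rewrite n1_v0; lra.
  - simpl. rewrite mapply_lin.
    set (M := Gm tau (phi tau t0 x)).
    replace (vsub (vadd (vscal (fst p) (fd (snd p) tau)) (Dsum Lc tau))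
              (vadd (vscal (fst p) (mapply M (delta (snd p) tau))) (mapply M (Wsum Lc tau))))
      with (vadd (vscal (fst p) (vsub (fd (snd p) tau) (mapply M (delta (snd p) tau))))
                 (vsub (Dsum Lc tau) (mapply M (Wsum Lc tau)))).
    + eapply Rle_trans; [apply n1_add|]. rewrite n1_scal.
      assert (Hp : n1 (snd p) < Y) by (apply Ha; left; reflexivity).
      pose proof (fd_taylor T (snd p) tau HT Hp Ht). fold M in H0.
      assert (Rabs (fst p) * n1 (vsub (fd (snd p) tau) (mapply M (delta (snd p) tau))) <=
              Rabs (fst p) * (7 * M2 * (n1 (snd p) * n1 (snd p)))) by (apply Rmult_le_compat_l; [apply Rabs_pos|lra]).
      assert (n1 (vsub (Dsum Lc tau) (mapply M (Wsum Lc tau))) <= etaL Lc).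
      { apply IH. intros q Hq. apply Ha; right; exact Hq. }
      lra.
    + destruct (fd (snd p) tau) as [[a1 a2] a3], (Dsum Lc tau) as [[b1 b2] b3],
        (mapply M (delta (snd p) tau)) as [[c1 c2] c3], (mapply M (Wsum Lc tau)) as [[d1 d2] d3].
      unfold vadd, vsub, vscal; simpl. v3eq; ring.
Qed.

Lemma comb T Lc : Tgood T -> allsmall Lc ->
  n1 (Wsum Lc (t0 + T)) <= n1 (Wsum0 Lc) + 2 * (LL * n1 (Wsum0 Lc) + etaL Lc) * T.
Proof.
  intros HT Ha. pose proof HT as [HT0 [HTd [HTr [HTF HTL]]]].
  pose proof LL_ge0. pose proof (n1_ge0 (Wsum0 Lc)). pose proof (etaL_ge0 Lc).
  replace T with (t0 + T - t0) at 2 by ring.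
  apply (gronwall (fun s => n1 (Wsum Lc s)) t0 (t0 + T) LL (etaL Lc) (n1 (Wsum0 Lc))
     (n1 (Wsum0 Lc) + 2 * (LL * n1 (Wsum0 Lc) + etaL Lc) * T + 1)); try lra.
  - intros s Hs. apply (vd_cont _ _ _ (vd_Wsum Lc s Ha ltac:(lra))).
  - rewrite Wsum_t0 by exact Ha. lra.
  - intros s Hs _ e He.
    destruct (dini_n1 _ _ s (vd_Wsum Lc s Ha ltac:(lra)) e He) as [h0 [Hh0 Hd]].
    exists h0; split; [exact Hh0|]. intros h1 Hh1. specialize (Hd h1 Hh1).
    assert (Hb : n1 (Dsum Lc s) <= LL * n1 (Wsum Lc s) + etaL Lc).
    { pose proof (Dsum_bound T Lc s HT Ha ltac:(lra)).
      destruct (confine_cube T HT x x_small s ltac:(lra)) as [Hs1 Hc].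
      pose proof (mapply_n1 (Gm s (phi s t0 x)) (Wsum Lc s)).
      pose proof (KA_Gm s (phi s t0 x) Hs1 Hc). pose proof (n1_ge0 (Wsum Lc s)).
      pose proof (vsub_tri (Dsum Lc s) (mapply (Gm s (phi s t0 x)) (Wsum Lc s)) v0) as Htri.
      rewrite !n1_vsub0 in Htri.
      assert (KA (Gm s (phi s t0 x)) * n1 (Wsum Lc s) <= LL * n1 (Wsum Lc s)) by (apply Rmult_le_compat_r; lra).
      lra. }
    nra.
Qed.

Definition ebas (j : nat) : V3 := match j with 0%nat => (1,0,0) | 1%nat => (0,1,0) | _ => (0,0,1) end.

Lemma n1_ebas j : n1 (ebas j) = 1.
Proof. destruct j as [|[|j]]; unfold n1, ebas; simpl; rewrite ?Rabs_R1, ?Rabs_R0; ring. Qed.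

Lemma cv_const c : Un_cv (fun _ => c) c.
Proof. intros eps He. exists 0%nat. intros. unfold Rdist. rewrite Rminus_diag, Rabs_R0. lra. Qed.

Lemma limit_vec (a bl : V3) (b : nat -> V3) (nn : nat -> R) B C :
  0 <= C -> (forall n, 0 < nn n) -> (forall eps, 0 < eps -> exists N, forall n, (n >= N)%nat -> C / nn n < eps) ->
  (forall i, (i < 3)%nat -> Un_cv (fun n => cmp (b n) i) (cmp bl i)) ->
  (forall n, n1 (vsub a (b n)) <= B + C / nn n) ->
  n1 (vsub a bl) <= B.
Proof.
  intros HC Hnn Hsm Hcv Hb.
  apply (le_eps _ _ 1 5). lra. lra. intros e He.
  destruct (Hsm e ltac:(lra)) as [N0 HN0].
  destruct (Hcv 0%nat ltac:(lia) e ltac:(lra)) as [N1 HN1].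
  destruct (Hcv 1%nat ltac:(lia) e ltac:(lra)) as [N2 HN2].
  destruct (Hcv 2%nat ltac:(lia) e ltac:(lra)) as [N3 HN3].
  set (n := (N0 + N1 + N2 + N3)%nat).
  specialize (HN0 n ltac:(unfold n; lia)). specialize (HN1 n ltac:(unfold n; lia)).
  specialize (HN2 n ltac:(unfold n; lia)). specialize (HN3 n ltac:(unfold n; lia)).
  specialize (Hb n). unfold Rdist in *.
  pose proof (vsub_tri a (b n) bl).
  assert (n1 (vsub (b n) bl) <= 3*e) by (unfold n1, vsub; simpl; lra).
  lra.
Qed.

Lemma choiceR (P : nat -> nat -> R -> Prop) :
  (forall i k, exists l, P i k l) -> exists J : M3, forall i k, P i k (J i k).
Proof.
  intros Hx. exists (fun i k => proj1_sig (constructive_indefinite_description _ (Hx i k))).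
  intros i k. exact (proj2_sig (constructive_indefinite_description _ (Hx i k))).
Qed.

Section WithT.
Variable T : R.
Hypothesis HT : Tgood T.
Variable N0 : nat.
Hypothesis HN0 : / INR N0 < Y.
Hypothesis HN0p : (0 < N0)%nat.

Definition nn (n : nat) : R := INR (n + N0).

Lemma nn_pos n : 0 < nn n.
Proof. unfold nn. apply lt_0_INR. lia. Qed.

Lemma nn_ge n : INR N0 <= nn n.
Proof. unfold nn. apply le_INR. lia. Qed.

Lemma inv_nn_small n : / nn n < Y.
Proof.
  pose proof (nn_ge n). pose proof (nn_pos n). assert (0 < INR N0) by (apply lt_0_INR; lia).
  eapply Rle_lt_trans; [|exact HN0]. apply Rinv_le_contravar; lra.
Qed.

Definition ev (j n : nat) : V3 := vscal (/ nn n) (ebas j).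

Lemma ev_small j n : n1 (ev j n) < Y.
Proof.
  unfold ev. rewrite n1_scal, n1_ebas, Rmult_1_r, Rabs_pos_eq. apply inv_nn_small.
  pose proof (nn_pos n). left; apply Rinv_0_lt_compat; lra.
Qed.

Lemma n1_ev j n : n1 (ev j n) = / nn n.
Proof.
  unfold ev. rewrite n1_scal, n1_ebas, Rmult_1_r, Rabs_pos_eq; [reflexivity|].
  pose proof (nn_pos n). left; apply Rinv_0_lt_compat; lra.
Qed.

Definition seqv (j n : nat) : V3 := vscal (nn n) (delta (ev j n) (t0 + T)).

Lemma seqv_cauchy_bound j n m : n1 (vsub (seqv j n) (seqv j m)) <= 14 * M2 * T * (/ nn n + / nn m).
Proof.
  set (Lc := (nn n, ev j n) :: (- nn m, ev j m) :: nil).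
  assert (Ha : allsmall Lc).
  { intros p Hp. destruct Hp as [<-|[<-|[]]]; apply ev_small. }
  pose proof (comb T Lc HT Ha) as Hc.
  pose proof (nn_pos n). pose proof (nn_pos m).
  assert (E0 : Wsum0 Lc = v0).
  { unfold Wsum0, Lc, ev; simpl. unfold vadd, vscal, ebas, v0.
    destruct j as [|[|j]]; simpl; v3eq; field; lra. }
  assert (E1 : Wsum Lc (t0 + T) = vsub (seqv j n) (seqv j m)).
  { unfold Wsum, Lc, seqv; simpl.
    destruct (delta (ev j n) (t0 + T)) as [[a b] c], (delta (ev j m) (t0 + T)) as [[d e] g].
    unfold vadd, vscal, vsub, v0; simpl. v3eq; ring. }
  assert (E2 : etaL Lc = 7 * M2 * (/ nn n + / nn m)).
  { unfold etaL, Lc; simpl. rewrite !n1_ev, Rabs_Ropp, !Rabs_pos_eq by lra. field. lra. }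
  rewrite E0, E1, E2, n1_v0 in Hc. lra.
Qed.

Lemma seqv_cv : forall i j, (i < 3)%nat -> (j < 3)%nat -> exists l, Un_cv (fun n => cmp (seqv j n) i) l.
Proof.
  intros i j Hi Hj.
  destruct (R_complete (fun n => cmp (seqv j n) i)) as [l Hl]; [|exists l; exact Hl].
  intros eps He. pose proof M2_ge0. pose proof HT as [HT0 _].
  destruct (archimed_cor1 (eps / (28 * M2 * T + 1))) as [N [HN HNp]].
  { apply Rdiv_lt_0_compat; [lra|]. nra. }
  exists N. intros n m Hn Hm. unfold Rdist.
  pose proof (seqv_cauchy_bound j n m).
  assert (Hc : Rabs (cmp (seqv j n) i - cmp (seqv j m) i) <= n1 (vsub (seqv j n) (seqv j m))).
  { replace (cmp (seqv j n) i - cmp (seqv j m) i) with (cmp (vsub (seqv j n) (seqv j m)) i)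
      by (destruct i as [|[|[|i]]]; try lia; reflexivity). apply n1_comp; exact Hi. }
  assert (HNn : forall k, (k >= N)%nat -> / nn k <= / INR N).
  { intros k Hk. apply Rinv_le_contravar; [apply lt_0_INR; lia|]. unfold nn. apply le_INR. lia. }
  pose proof (HNn n Hn). pose proof (HNn m Hm).
  assert (Hpos : 0 < 28 * M2 * T + 1) by nra.
  assert (14 * M2 * T * (/ nn n + / nn m) <= 28 * M2 * T * / INR N).
  { assert (0 <= 14 * M2 * T) by nra. nra. }
  assert (28 * M2 * T * / INR N < eps).
  { assert (/ INR N * (28 * M2 * T + 1) < eps).
    { apply (Rmult_lt_compat_r (28 * M2 * T + 1)) in HN; [|lra].
      replace (eps / (28 * M2 * T + 1) * (28 * M2 * T + 1)) with eps in HN by (field; lra). exact HN. }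
    assert (0 <= / INR N) by (left; apply Rinv_0_lt_compat, lt_0_INR; lia). nra. }
  lra.
Qed.

Lemma J_exists : exists J : M3, forall i j, (i < 3)%nat -> (j < 3)%nat ->
  Un_cv (fun n => cmp (seqv j n) i) (J i j).
Proof.
  apply (choiceR (fun i j l => (i < 3)%nat -> (j < 3)%nat -> Un_cv (fun n => cmp (seqv j n) i) l)).
  intros i j. destruct (Compare_dec.lt_dec i 3) as [Hi|Hi]; [|exists 0; intros; lia].
  destruct (Compare_dec.lt_dec j 3) as [Hj|Hj]; [|exists 0; intros; lia].
  destruct (seqv_cv i j Hi Hj) as [l Hl]. exists l; intros; exact Hl.
Qed.

Lemma J_approx (J : M3) : (forall i j, (i < 3)%nat -> (j < 3)%nat -> Un_cv (fun n => cmp (seqv j n) i) (J i j)) ->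
  forall h, n1 h < Y -> n1 (vsub (delta h (t0 + T)) (mapply J h)) <= 14 * M2 * T * (n1 h * n1 h).
Proof.
  intros HJ h Hh. pose proof M2_ge0. pose proof HT as [HT0 _].
  destruct h as [[h0 h1] h2].
  set (bn := fun n => vadd (vscal h0 (seqv 0 n)) (vadd (vscal h1 (seqv 1 n)) (vscal h2 (seqv 2 n)))).
  apply (limit_vec _ _ bn nn (14 * M2 * T * (n1 (h0,h1,h2) * n1 (h0,h1,h2))) (14 * M2 * T * n1 (h0,h1,h2))).
  - pose proof (n1_ge0 (h0,h1,h2)). repeat apply Rmult_le_pos; lra.
  - exact nn_pos.
  - intros eps He. pose proof (n1_ge0 (h0,h1,h2)).
    destruct (archimed_cor1 (eps / (14 * M2 * T * n1 (h0,h1,h2) + 1))) as [N [HN HNp]].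
    { apply Rdiv_lt_0_compat; [lra|]. assert (0 <= 14 * M2 * T * n1 (h0,h1,h2)) by (repeat apply Rmult_le_pos; lra). lra. }
    exists N. intros n Hn.
    assert (/ nn n <= / INR N) by (apply Rinv_le_contravar; [apply lt_0_INR; lia|unfold nn; apply le_INR; lia]).
    assert (0 <= 14 * M2 * T * n1 (h0,h1,h2)) by (repeat apply Rmult_le_pos; lra).
    assert (Hpos : 0 < 14 * M2 * T * n1 (h0,h1,h2) + 1) by lra.
    assert (/ INR N * (14 * M2 * T * n1 (h0,h1,h2) + 1) < eps).
    { apply (Rmult_lt_compat_r (14 * M2 * T * n1 (h0,h1,h2) + 1)) in HN; [|lra].
      replace (eps / (14 * M2 * T * n1 (h0,h1,h2) + 1) * (14 * M2 * T * n1 (h0,h1,h2) + 1)) with eps in HN by (field; lra).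
      exact HN. }
    assert (0 <= / nn n) by (left; apply Rinv_0_lt_compat, nn_pos).
    unfold Rdiv. nra.
  - intros i Hi. unfold bn.
    assert (Hc : forall (a b c l0 l1 l2 : R) (U0 U1 U2 : nat -> R), Un_cv U0 l0 -> Un_cv U1 l1 -> Un_cv U2 l2 ->
       Un_cv (fun n => a * U0 n + (b * U1 n + c * U2 n)) (a*l0 + (b*l1 + c*l2))).
    { intros a b c l0 l1 l2 U0 U1 U2 Q0 Q1 Q2.
      apply (CV_plus (fun n => a * U0 n) (fun n => b * U1 n + c * U2 n)).
      - apply (CV_mult (fun _ => a) U0); [apply cv_const|exact Q0].
      - apply (CV_plus (fun n => b * U1 n) (fun n => c * U2 n));
        [apply (CV_mult (fun _ => b) U1); [apply cv_const|exact Q1]|apply (CV_mult (fun _ => c) U2); [apply cv_const|exact Q2]]. }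
    assert (Hext : forall U l l', Un_cv U l -> l = l' -> Un_cv U l') by (intros; subst; assumption).
    destruct i as [|[|[|i]]]; try lia; unfold vadd, vscal, mapply, mrow; cbn [cmp];
    (eapply Hext; [apply Hc; apply HJ; lia|ring]).
  - intros n.
    set (Lc := (1, (h0,h1,h2)) :: (-(h0 * nn n), ev 0 n) :: (-(h1 * nn n), ev 1 n) :: (-(h2 * nn n), ev 2 n) :: nil).
    assert (Ha : allsmall Lc).
    { intros p Hp. destruct Hp as [<-|[<-|[<-|[<-|[]]]]]; try apply ev_small. exact Hh. }
    pose proof (comb T Lc HT Ha) as Hc.
    pose proof (nn_pos n).
    assert (E0 : Wsum0 Lc = v0).
    { unfold Wsum0, Lc, ev; simpl. unfold vadd, vscal, ebas, v0; simpl. v3eq; field; lra. }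
    assert (E1 : Wsum Lc (t0 + T) = vsub (delta (h0,h1,h2) (t0 + T)) (bn n)).
    { unfold Wsum, Lc, bn, seqv; simpl.
      destruct (delta (h0,h1,h2) (t0 + T)) as [[a b] c], (delta (ev 0 n) (t0 + T)) as [[d e] g],
        (delta (ev 1 n) (t0 + T)) as [[k l] m], (delta (ev 2 n) (t0 + T)) as [[o q] w].
      unfold vadd, vscal, vsub, v0; simpl. v3eq; ring. }
    assert (E2 : etaL Lc = 7 * M2 * (n1 (h0,h1,h2) * n1 (h0,h1,h2)) + 7 * M2 * n1 (h0,h1,h2) * / nn n).
    { unfold etaL, Lc; simpl. rewrite !n1_ev, !Rabs_Ropp, !Rabs_mult, Rabs_R1, (Rabs_pos_eq (nn n)) by lra.
      unfold n1; simpl. field. lra. }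
    rewrite E0, E1, E2, n1_v0 in Hc. unfold Rdiv. lra.
Qed.

Lemma delta_minus_h h : n1 h < Y -> forall tau, t0 <= tau <= t0 + T ->
  n1 (vsub (delta h tau) h) <= 3 * LL * n1 h * (tau - t0).
Proof.
  intros Hh tau Htau. pose proof HT as [HT0 [HTd [HTr [HTF HTL]]]].
  pose proof LL_ge0. pose proof (n1_ge0 h).
  assert (Hvd : forall s, t0 - del < s < t0 + del -> vd (fun s => vsub (delta h s) h) s (vsub (fd h s) v0)).
  { intros s0 Hs0. apply vd_sub; [apply vd_delta; auto|apply vd_const]. }
  assert (Hg := gronwall (fun s => n1 (vsub (delta h s) h)) t0 (t0 + T) 0 (3/2 * LL * n1 h) 0
     (3 * LL * n1 h * T + 1) ltac:(lra) ltac:(lra) ltac:(nra) ltac:(lra) ltac:(lra)).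
  assert (n1 (vsub (delta h tau) h) <= 0 + 2 * (0 * 0 + 3/2 * LL * n1 h) * (tau - t0)).
  { apply Hg; [| | | |exact Htau].
    - intros s0 Hs0. apply (vd_cont _ _ _ (Hvd s0 ltac:(lra))).
    - rewrite delta_t0 by exact Hh.
      replace (vsub h h) with v0 by (destruct h as [[a b] c]; unfold vsub, v0; simpl; v3eq; ring).
      rewrite n1_v0; lra.
    - lra.
    - intros s0 Hs0 _ e He.
      destruct (dini_n1 _ _ s0 (Hvd s0 ltac:(lra)) e He) as [h0 [Hh0 Hd]].
      exists h0; split; [exact Hh0|]. intros h1 Hh1. specialize (Hd h1 Hh1).
      rewrite n1_vsub0 in Hd.
      pose proof (fd_lip T h s0 HT Hh ltac:(lra)). pose proof (lip_delta T HT h Hh s0 ltac:(lra)).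
      assert (LL * n1 (delta h s0) <= LL * (3/2 * n1 h)) by (apply Rmult_le_compat_l; lra).
      nra. }
  lra.
Qed.

Lemma lin_approx h : n1 h < Y ->
  n1 (vsub (vsub (delta h (t0 + T)) h) (vscal T (mapply A h))) <= 2 * (9/2 * e1 + 3 * KA A * LL * T) * n1 h * T.
Proof.
  intros Hh. pose proof HT as [HT0 [HTd [HTr [HTF HTL]]]].
  pose proof LL_ge0. pose proof M1_ge0. pose proof (n1_ge0 h). pose proof (KA_ge0 A).
  assert (Hvd : forall s, t0 - del < s < t0 + del ->
     vd (fun s => vsub (vsub (delta h s) h) (vscal (s - t0) (mapply A h))) s (vsub (vsub (fd h s) v0) (mapply A h))).
  { intros s0 Hs0. apply vd_sub; [apply vd_sub; [apply vd_delta; auto|apply vd_const]|apply vd_lin]. }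
  set (eta := (9/2 * e1 + 3 * KA A * LL * T) * n1 h).
  assert (Heta : 0 <= eta).
  { unfold eta. apply Rmult_le_pos; [|lra]. assert (0 <= 3 * KA A * LL * T) by (repeat apply Rmult_le_pos; lra). lra. }
  assert (Hres : n1 (vsub (vsub (delta h (t0 + T)) h) (vscal (t0 + T - t0) (mapply A h)))
     <= 0 + 2 * (0 * 0 + eta) * (t0 + T - t0)).
  2: { replace (t0 + T - t0) with T in Hres by ring. unfold eta in Hres. lra. }
  apply (gronwall (fun s => n1 (vsub (vsub (delta h s) h) (vscal (s - t0) (mapply A h)))) t0 (t0 + T) 0 eta 0
     (2 * eta * T + 1)); try lra.
  - intros s0 Hs0. apply (vd_cont _ _ _ (Hvd s0 ltac:(lra))).
  - rewrite delta_t0 by exact Hh. rewrite Rminus_diag.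
    replace (vsub (vsub h h) (vscal 0 (mapply A h))) with v0
      by (destruct (mapply A h) as [[p q] w]; destruct h as [[a b] c]; unfold vsub, vscal, v0; simpl; v3eq; ring).
    rewrite n1_v0; lra.
  - intros s0 Hs0 _ e He.
    destruct (dini_n1 _ _ s0 (Hvd s0 ltac:(lra)) e He) as [h0 [Hh0 Hd]].
    exists h0; split; [exact Hh0|]. intros h1 Hh1. specialize (Hd h1 Hh1).
    assert (Hb : n1 (vsub (vsub (fd h s0) v0) (mapply A h)) <= eta).
    { replace (vsub (vsub (fd h s0) v0) (mapply A h)) with
        (vadd (vsub (fd h s0) (mapply A (delta h s0))) (mapply A (vsub (delta h s0) h))).
      2: { rewrite mapply_sub. destruct (fd h s0) as [[a b] c], (mapply A (delta h s0)) as [[p q] w],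
             (mapply A h) as [[k l] m]. unfold vadd, vsub, v0; simpl. v3eq; ring. }
      eapply Rle_trans; [apply n1_add|].
      destruct (confine_cube T HT (vadd x h) (xh_small h Hh) s0 ltac:(lra)) as [Hs Hc1].
      destruct (confine_cube T HT x x_small s0 ltac:(lra)) as [_ Hc2].
      pose proof (linf s0 _ _ Hs Hc1 Hc2) as L1. fold (fd h s0) (delta h s0) in L1.
      pose proof (lip_delta T HT h Hh s0 ltac:(lra)).
      pose proof (mapply_n1 A (vsub (delta h s0) h)).
      pose proof (delta_minus_h h Hh s0 ltac:(lra)).
      pose proof (n1_ge0 (vsub (delta h s0) h)).
      assert (3 * e1 * n1 (delta h s0) <= 3 * e1 * (3/2 * n1 h)) by (apply Rmult_le_compat_l; lra).
      assert (KA A * n1 (vsub (delta h s0) h) <= KA A * (3 * LL * n1 h * (s0 - t0))) by (apply Rmult_le_compat_l; lra).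
      assert (LL * n1 h * (s0 - t0) <= LL * n1 h * T).
      { apply Rmult_le_compat_l; [apply Rmult_le_pos; lra|lra]. }
      assert (KA A * (3 * LL * n1 h * (s0 - t0)) <= KA A * (3 * LL * n1 h * T)) by (apply Rmult_le_compat_l; lra).
      unfold eta. nra. }
    nra.
Qed.

End WithT.

Lemma flow_result T : Tgood T -> exists J, frechet_at (psi phi t0 T) x J /\
  forall v, n1 (vsub (vsub (mapply J v) v) (vscal T (mapply A v))) <= (9 * e1 + 6 * KA A * LL * T) * T * n1 v.
Proof.
  intros HT. pose proof HT as [HT0 _].
  assert (HY : 0 < Y) by (unfold Y; apply Rmin_pos; lra).
  destruct (archimed_cor1 Y HY) as [N0 [HN0 HN0p]].
  destruct (J_exists T HT N0 HN0 HN0p) as [J HJ].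
  pose proof (J_approx T HT N0 HN0 HN0p J HJ) as Happ.
  pose proof M2_ge0. pose proof LL_ge0. pose proof (KA_ge0 A).
  exists J. split.
  - intros eps He. exists (Rmin Y (eps / (14 * M2 * T + 1))).
    assert (Hp : 0 < 14 * M2 * T + 1) by (assert (0 <= 14 * M2 * T) by (repeat apply Rmult_le_pos; lra); lra).
    split; [apply Rmin_pos; [lra|apply Rdiv_lt_0_compat; lra]|].
    intros h Hh. unfold psi. change (vsub (phi (t0 + T) t0 (vadd x h)) (phi (t0 + T) t0 x)) with (delta h (t0 + T)).
    assert (Hh1 : n1 h < Y) by (eapply Rlt_le_trans; [exact Hh|apply Rmin_l]).
    assert (Hh2 : n1 h <= eps / (14 * M2 * T + 1)) by (left; eapply Rlt_le_trans; [exact Hh|apply Rmin_r]).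
    eapply Rle_trans; [apply Happ; exact Hh1|].
    pose proof (n1_ge0 h).
    assert (14 * M2 * T * n1 h <= eps).
    { apply (Rmult_le_compat_l (14 * M2 * T + 1)) in Hh2; [|lra].
      replace ((14 * M2 * T + 1) * (eps / (14 * M2 * T + 1))) with eps in Hh2 by (field; lra).
      assert (0 <= 14 * M2 * T) by (repeat apply Rmult_le_pos; lra). nra. }
    assert (0 <= 14 * M2 * T) by (repeat apply Rmult_le_pos; lra).
    replace (14 * M2 * T * (n1 h * n1 h)) with ((14 * M2 * T * n1 h) * n1 h) by ring.
    apply Rmult_le_compat_r; lra.
  - intros v. pose proof (n1_ge0 v).
    apply (le_eps _ _ (Y / (n1 v + 1)) (14 * M2 * T * (n1 v * n1 v))).
    + apply Rdiv_lt_0_compat; lra.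
    + assert (0 <= 14 * M2 * T) by (repeat apply Rmult_le_pos; lra). nra.
    + intros s [Hs0 Hs1].
      assert (Hsv : n1 (vscal s v) < Y).
      { rewrite n1_scal, Rabs_pos_eq by lra.
        apply (Rmult_lt_compat_r (n1 v + 1)) in Hs1; [|lra].
        replace (Y / (n1 v + 1) * (n1 v + 1)) with Y in Hs1 by (field; lra). nra. }
      pose proof (Happ (vscal s v) Hsv) as P1.
      pose proof (lin_approx T HT (vscal s v) Hsv) as P2.
      set (Dh := delta (vscal s v) (t0 + T)) in *.
      assert (E : vsub (vsub (mapply J (vscal s v)) (vscal s v)) (vscal T (mapply A (vscal s v)))
                = vsub (vsub (vsub Dh (vscal s v)) (vscal T (mapply A (vscal s v)))) (vsub Dh (mapply J (vscal s v)))).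
      { destruct Dh as [[a b] c], (mapply J (vscal s v)) as [[p q] w], (vscal s v) as [[k l] m],
          (mapply A (vscal s v)) as [[o r'] u]. unfold vsub, vscal; simpl. v3eq; ring. }
      assert (E2 : vsub (vsub (mapply J (vscal s v)) (vscal s v)) (vscal T (mapply A (vscal s v)))
                 = vscal s (vsub (vsub (mapply J v) v) (vscal T (mapply A v)))).
      { rewrite !mapply_scal. destruct (mapply J v) as [[a b] c], (mapply A v) as [[k l] m], v as [[p q] w].
        unfold vsub, vscal; simpl. v3eq; ring. }
      pose proof (n1_sub (vsub (vsub Dh (vscal s v)) (vscal T (mapply A (vscal s v)))) (vsub Dh (mapply J (vscal s v)))) as P3.
      rewrite <- E, E2, !n1_scal, Rabs_pos_eq in P3 by lra.
      rewrite n1_scal, Rabs_pos_eq in P1, P2 by lra.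
      set (X := n1 (vsub (vsub (mapply J v) v) (vscal T (mapply A v)))) in *.
      assert (s * X <= s * ((9 * e1 + 6 * KA A * LL * T) * T * n1 v + s * (14 * M2 * T * (n1 v * n1 v)))) by nra.
      apply (Rmult_le_reg_l s); lra.
Qed.

End Flow.

Theorem mainTheorem4 (D : R -> V3 -> Prop) (f : R -> V3 -> V3)
  (phi : R -> R -> V3 -> V3) (t0 : R) (x : V3) :
  open_domain D ->
  C3_field D f ->
  incompressible D f ->
  D t0 x ->
  (exists A, spatial_jacobian f t0 x A /\ det3 A <> 0) ->
  is_flow_near D f phi t0 x ->
  exists Tmin, 0 < Tmin /\
    forall T, 0 < T < Tmin -> mesohyperbolic phi t0 T x.
Proof.
  intros Ho Hf Hinc Hx [A [HA Hdet]] Hfl.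
  assert (Htr : A 0%nat 0%nat + A 1%nat 1%nat + A 2%nat 2%nat = 0).
  { destruct (Hinc t0 x Hx) as [A' [HA' Htr']].
    assert (E : forall i, (i < 3)%nat -> A' i i = A i i).
    { intros i Hi. apply (uniqueness_limite _ _ _ _ (HA' i i Hi Hi) (HA i i Hi Hi)). }
    rewrite <- (E 0%nat), <- (E 1%nat), <- (E 2%nat) by lia. exact Htr'. }
  destruct (eigen_main A Htr Hdet) as [eps [T2 [Heps [HT2 Heig]]]].
  set (e1 := eps / 18).
  assert (He1 : 0 < e1) by (unfold e1; lra).
  destruct (setup_exists D f t0 x A Ho Hf Hx HA e1 He1) as [rho [G [H [M2 [Fb [Hrho Hset]]]]]].
  destruct Hfl as [del [r [Hdel [Hr Hfl]]]].
  assert (Hflow : forall y, n1 (vsub y x) < r -> phi t0 t0 y = y /\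
    forall tau, t0 - del < tau < t0 + del -> forall i, (i < 3)%nat ->
      derivable_pt_lim (fun s => cmp (phi s t0 y) i) tau (cmp (f tau (phi tau t0 y)) i)).
  { intros y Hy. destruct (Hfl y Hy) as [E P]. split; [exact E|].
    intros tau Ht. apply (P tau Ht). }
  pose proof (Fb_ge0 f t0 x A rho G H M2 Fb e1 Hset Hrho) as HFb.
  pose proof (LL_ge0 A e1 He1) as HLL.
  pose proof (KA_ge0 A) as HKA.
  set (LLc := LL A e1) in *.
  set (K := KA A) in *.
  set (Tmin := Rmin T2 (Rmin (del/2) (Rmin (rho/2) (Rmin (rho / (12 * Fb + 1))
                 (Rmin (1 / (4 * LLc + 1)) (eps / (12 * K * LLc + 1))))))).
  assert (Hden : 0 < 12 * K * LLc + 1) by (assert (0 <= 12 * K * LLc) by (apply Rmult_le_pos; [apply Rmult_le_pos|]; lra); lra).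
  assert (HTmin : 0 < Tmin).
  { unfold Tmin. repeat apply Rmin_pos; try lra; apply Rdiv_lt_0_compat; lra. }
  exists Tmin. split; [exact HTmin|].
  intros T [HT0 HT1].
  assert (B1 : T < T2) by (eapply Rlt_le_trans; [exact HT1|apply Rmin_l]).
  assert (B2 : T < del/2) by (eapply Rlt_le_trans; [exact HT1|]; unfold Tmin;
    eapply Rle_trans; [apply Rmin_r|apply Rmin_l]).
  assert (B3 : T < rho/2) by (eapply Rlt_le_trans; [exact HT1|]; unfold Tmin;
    eapply Rle_trans; [apply Rmin_r|]; eapply Rle_trans; [apply Rmin_r|apply Rmin_l]).
  assert (B4 : T < rho / (12 * Fb + 1)) by (eapply Rlt_le_trans; [exact HT1|]; unfold Tmin;
    eapply Rle_trans; [apply Rmin_r|]; eapply Rle_trans; [apply Rmin_r|];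
    eapply Rle_trans; [apply Rmin_r|apply Rmin_l]).
  assert (B5 : T < 1 / (4 * LLc + 1)) by (eapply Rlt_le_trans; [exact HT1|]; unfold Tmin;
    eapply Rle_trans; [apply Rmin_r|]; eapply Rle_trans; [apply Rmin_r|];
    eapply Rle_trans; [apply Rmin_r|]; eapply Rle_trans; [apply Rmin_r|apply Rmin_l]).
  assert (B6 : T < eps / (12 * K * LLc + 1)) by (eapply Rlt_le_trans; [exact HT1|]; unfold Tmin;
    eapply Rle_trans; [apply Rmin_r|]; eapply Rle_trans; [apply Rmin_r|];
    eapply Rle_trans; [apply Rmin_r|]; eapply Rle_trans; [apply Rmin_r|apply Rmin_r]).
  assert (HTg : Tgood A rho Fb e1 del T).
  { unfold Tgood. fold LLc. split; [lra|]. split; [lra|]. split; [lra|]. split.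
    - apply (Rmult_lt_compat_r (12 * Fb + 1)) in B4; [|lra].
      replace (rho / (12 * Fb + 1) * (12 * Fb + 1)) with rho in B4 by (field; lra). nra.
    - apply (Rmult_lt_compat_r (4 * LLc + 1)) in B5; [|lra].
      replace (1 / (4 * LLc + 1) * (4 * LLc + 1)) with 1 in B5 by (field; lra). nra. }
  destruct (flow_result f phi t0 x A rho G H M2 Fb e1 del r Hset Hrho Hr He1 Hflow T HTg) as [J [HJ HJb]].
  exists J. split; [exact HJ|].
  apply (Heig T J); [lra|].
  intros v. eapply Rle_trans; [apply HJb|]. fold K LLc.
  pose proof (n1_ge0 v).
  apply Rmult_le_compat_r; [lra|]. apply Rmult_le_compat_r; [lra|].
  apply (Rmult_lt_compat_r (12 * K * LLc + 1)) in B6; [|lra].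
  replace (eps / (12 * K * LLc + 1) * (12 * K * LLc + 1)) with eps in B6 by (field; lra).
  assert (0 <= K * LLc * T) by (apply Rmult_le_pos; [apply Rmult_le_pos|]; lra).
  unfold e1. nra.
Qed.
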